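(* Let $0<a<b<1$. There exist $c_1,c_2,c_3,c_4,R_0>0$ such that for every $R\ge R_0$ there exists a family $(F_\alpha)_{\alpha\in A}$ of $C^2$ diffeomorphisms onto their images $F_\alpha:\mathbb{R}\times[-R^a,2R^a]\to\mathbb{R}^2$ with $F_\alpha(0)=0$, satisfying: 1. $|A|\ge\exp(c_1R^{1-b})$; 2. for any distinct $\alpha,\alpha'\in A$, either there is a continuous path contained in $F_\alpha([0,R]\times\{0\})\cap F_{\alpha'}([0,R]\times[0,R^a])$ going from $0$ to $F_{\alpha'}([0,R]\times\{R^a\})$, or the same holds with $\alpha$ and $\alpha'$ interchanged; 3. for every $\alpha\in A$ and $x\in\mathbb{R}\times[-R^a,2R^a]$: (i) $|d^2_xF_\alpha|\le c_2R^{2(a-b)}$; (ii) there is $J^\alpha_x\in O(2)$ with $|d_xF_\alpha-J^\alpha_x|\le c_3R^{2(a-b)}$; (iii) for every $y\in\mathbb{R}\times[-R^a,2R^a]$, $|x-y|/c_4\le|F_\alpha(x)-F_\alpha(y)|\le c_4|x-y|$. *)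

(* Defs.v *)
From Stdlib Require Import Reals Lra.
From Coquelicot Require Import Coquelicot.
Open Scope R_scope.

Definition pt := (R * R)%type.

Definition enorm (p : pt) : R := sqrt (fst p ^ 2 + snd p ^ 2).
Definition edist (p q : pt) : R := enorm (fst p - fst q, snd p - snd q).

Definition strip (lo hi : R) (p : pt) : Prop := lo <= snd p <= hi.

Definition rect (x0 x1 y0 y1 : R) (p : pt) : Prop :=
  x0 <= fst p <= x1 /\ y0 <= snd p <= y1.

Definition img (F : pt -> pt) (S : pt -> Prop) (q : pt) : Prop :=
  exists p, S p /\ F p = q.

Definition is_open (U : pt -> Prop) : Prop :=
  forall p, U p -> exists e, 0 < e /\ forall q, edist q p < e -> U q.

Definition cont_at (g : pt -> R) (p : pt) : Prop :=
  forall eps, 0 < eps -> exists del, 0 < del /\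
    forall q, edist q p < del -> Rabs (g q - g p) < eps.

Definition d1 (g : pt -> R) (p : pt) : R := Derive (fun t => g (t, snd p)) (fst p).
Definition d2 (g : pt -> R) (p : pt) : R := Derive (fun t => g (fst p, t)) (snd p).

Definition C1_on (U : pt -> Prop) (g : pt -> R) : Prop :=
  forall p, U p ->
    ex_derive (fun t => g (t, snd p)) (fst p) /\
    ex_derive (fun t => g (fst p, t)) (snd p) /\
    cont_at (d1 g) p /\ cont_at (d2 g) p.

Definition C2_on (U : pt -> Prop) (g : pt -> R) : Prop :=
  C1_on U g /\ C1_on U (d1 g) /\ C1_on U (d2 g).

Definition comp1 (F : pt -> pt) : pt -> R := fun p => fst (F p).
Definition comp2 (F : pt -> pt) : pt -> R := fun p => snd (F p).

(* F is C^2 on a (not necessarily open) set S: it is C^2 on an open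
   neighbourhood of S. *)
Definition C2_near (S : pt -> Prop) (F : pt -> pt) : Prop :=
  exists U, is_open U /\ (forall p, S p -> U p) /\
    C2_on U (comp1 F) /\ C2_on U (comp2 F).

Definition C2_diffeo_onto_image (S : pt -> Prop) (F : pt -> pt) : Prop :=
  C2_near S F /\
  exists G : pt -> pt,
    (forall p, S p -> G (F p) = p) /\ C2_near (img F S) G.

Record mat2 := Mat2 { m11 : R; m12 : R; m21 : R; m22 : R }.

(* J in O(2): J^T J = I. *)
Definition in_O2 (J : mat2) : Prop :=
  m11 J * m11 J + m21 J * m21 J = 1 /\
  m12 J * m12 J + m22 J * m22 J = 1 /\
  m11 J * m12 J + m21 J * m22 J = 0.

Definition jac (F : pt -> pt) (x : pt) : mat2 :=
  Mat2 (d1 (comp1 F) x) (d2 (comp1 F) x) (d1 (comp2 F) x) (d2 (comp2 F) x).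

Definition mnorm (M : mat2) : R :=
  sqrt (m11 M ^ 2 + m12 M ^ 2 + m21 M ^ 2 + m22 M ^ 2).
Definition mdiff (M N : mat2) : mat2 :=
  Mat2 (m11 M - m11 N) (m12 M - m12 N) (m21 M - m21 N) (m22 M - m22 N).

(* Norm of the second differential d^2_x F (Euclidean norm of the
   tensor of all second-order partial derivatives). *)
Definition hess_sq (g : pt -> R) (x : pt) : R :=
  d1 (d1 g) x ^ 2 + d2 (d1 g) x ^ 2 + d1 (d2 g) x ^ 2 + d2 (d2 g) x ^ 2.
Definition d2norm (F : pt -> pt) (x : pt) : R :=
  sqrt (hess_sq (comp1 F) x + hess_sq (comp2 F) x).

Definition path_from0_to (P Q : pt -> Prop) : Prop :=
  exists gam : R -> pt,
    (forall t, 0 <= t <= 1 -> forall eps, 0 < eps -> exists del, 0 < del /\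
        forall s, 0 <= s <= 1 -> Rabs (s - t) < del -> edist (gam s) (gam t) < eps) /\
    (forall t, 0 <= t <= 1 -> P (gam t)) /\
    gam 0 = (0, 0) /\ Q (gam 1).

(* Main.v *)
Require Import Defs.
From Stdlib Require Import Reals.
From Coquelicot Require Import Coquelicot.
From Stdlib Require Import Lra Lia FunctionalExtensionality ClassicalEpsilon Classical.
Open Scope R_scope.


Lemma Rabs_le_sqrt (a b : R) : Rabs a <= sqrt (a ^ 2 + b ^ 2).
Proof.
  rewrite <- sqrt_Rsqr_abs. apply sqrt_le_1_alt. unfold Rsqr. nra.
Qed.

Lemma sqrt_le_abs_sum (a b : R) : sqrt (a ^ 2 + b ^ 2) <= Rabs a + Rabs b.
Proof.
  rewrite <- (sqrt_Rsqr (Rabs a + Rabs b)) by (generalize (Rabs_pos a) (Rabs_pos b); lra).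
  apply sqrt_le_1_alt. unfold Rsqr.
  rewrite <- (pow2_abs a), <- (pow2_abs b).
  generalize (Rabs_pos a) (Rabs_pos b); nra.
Qed.

Lemma edist_fst p q : Rabs (fst p - fst q) <= edist p q.
Proof. unfold edist, enorm; simpl. apply Rabs_le_sqrt. Qed.
Lemma edist_snd p q : Rabs (snd p - snd q) <= edist p q.
Proof. unfold edist, enorm; simpl. rewrite Rplus_comm. apply Rabs_le_sqrt. Qed.
Lemma edist_le p q : edist p q <= Rabs (fst p - fst q) + Rabs (snd p - snd q).
Proof. unfold edist, enorm; simpl. apply sqrt_le_abs_sum. Qed.

Lemma cont2_ed (f : R * R -> R) p : continuous f p ->
  forall eps, 0 < eps -> exists del, 0 < del /\ forall q,
    Rabs (fst q - fst p) < del -> Rabs (snd q - snd p) < del -> Rabs (f q - f p) < eps.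
Proof.
  intros H eps Heps.
  destruct (proj1 (filterlim_locally f (f p)) H (mkposreal eps Heps)) as [d Hd].
  exists d. split. apply cond_pos. intros q H1 H2.
  apply (Hd q). split; assumption.
Qed.

Lemma ed_cont2 (f : R * R -> R) p :
  (forall eps, 0 < eps -> exists del, 0 < del /\ forall q,
    Rabs (fst q - fst p) < del -> Rabs (snd q - snd p) < del -> Rabs (f q - f p) < eps) ->
  continuous f p.
Proof.
  intros H. apply (proj2 (filterlim_locally f (f p))). intros eps.
  destruct (H eps (cond_pos eps)) as [d [Hd H']].
  exists (mkposreal d Hd). intros q [H1 H2]. apply H'; assumption.
Qed.

Lemma cont_to_cont_at (g : pt -> R) p : continuous g p -> cont_at g p.
Proof.
  intros H eps Heps. destruct (cont2_ed g p H eps Heps) as [d [Hd H']].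
  exists d; split; auto. intros q Hq. apply H'.
  - eapply Rle_lt_trans; [apply edist_fst | exact Hq].
  - eapply Rle_lt_trans; [apply edist_snd | exact Hq].
Qed.

Lemma glue_derive (f g k : R -> R) (c d : R) :
  (forall t, c - 1 < t <= c -> f t = g t) ->
  (forall t, c <= t < c + 1 -> f t = k t) ->
  is_derive g c d -> is_derive k c d -> is_derive f c d.
Proof.
  intros Hg Hk Dg Dk. apply is_derive_Reals. apply is_derive_Reals in Dg, Dk.
  intros eps Heps. destruct (Dg eps Heps) as [d1 H1]. destruct (Dk eps Heps) as [d2 H2].
  assert (Hd : 0 < Rmin 1 (Rmin d1 d2)).
  { apply Rmin_pos; [lra | apply Rmin_pos; apply cond_pos]. }
  exists (mkposreal _ Hd). intros hh Hh0 Hh. simpl in Hh.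
  assert (Ha := Rmin_l 1 (Rmin d1 d2)). assert (Hb := Rmin_r 1 (Rmin d1 d2)).
  assert (Hc := Rmin_l d1 d2). assert (He := Rmin_r d1 d2).
  assert (Hf : f c = g c) by (apply Hg; lra).
  assert (Hf' : f c = k c) by (apply Hk; lra).
  destruct (Rle_or_lt hh 0) as [Hn | Hp].
  - rewrite Hf, (Hg (c + hh)).
    + apply H1; auto. lra.
    + apply Rabs_def2 in Hh. lra.
  - rewrite Hf', (Hk (c + hh)).
    + apply H2; auto. lra.
    + apply Rabs_def2 in Hh. lra.
Qed.

Lemma locally_interval (a b t : R) : a < t < b -> locally t (fun y => a < y < b).
Proof.
  intros [H1 H2]. assert (Hd : 0 < Rmin (t - a) (b - t)) by (apply Rmin_pos; lra).
  exists (mkposreal _ Hd). intros y Hy. simpl in Hy.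
  change (Rabs (y - t) < Rmin (t - a) (b - t)) in Hy.
  apply Rabs_def2 in Hy. generalize (Rmin_l (t - a) (b - t)) (Rmin_r (t - a) (b - t)). lra.
Qed.

Lemma glue_cont (f : R -> R) (c : R) (g k : R -> R) :
  (forall t, c - 1 < t <= c -> f t = g t) ->
  (forall t, c <= t < c + 1 -> f t = k t) ->
  continuous g c -> continuous k c -> continuous f c.
Proof.
  intros Hg Hk Cg Ck.
  apply (proj2 (filterlim_locally f (f c))). intros eps.
  destruct (proj1 (filterlim_locally g (g c)) Cg eps) as [d1 H1].
  destruct (proj1 (filterlim_locally k (k c)) Ck eps) as [d2 H2].
  assert (Hd : 0 < Rmin 1 (Rmin d1 d2)).
  { apply Rmin_pos; [lra | apply Rmin_pos; apply cond_pos]. }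
  exists (mkposreal _ Hd). intros y Hy. simpl in Hy.
  change (Rabs (y - c) < Rmin 1 (Rmin d1 d2)) in Hy.
  assert (Ha := Rmin_l 1 (Rmin d1 d2)). assert (Hb := Rmin_r 1 (Rmin d1 d2)).
  assert (Hc := Rmin_l d1 d2). assert (He := Rmin_r d1 d2).
  apply Rabs_def2 in Hy.
  destruct (Rle_or_lt y c).
  - rewrite (Hg y) by lra. rewrite (Hg c) by lra. apply H1.
    change (Rabs (y - c) < d1). apply Rabs_def1; lra.
  - rewrite (Hk y) by lra. rewrite (Hk c) by lra. apply H2.
    change (Rabs (y - c) < d2). apply Rabs_def1; lra.
Qed.


Definition pw (A B : R) (P : R -> R) (t : R) : R :=
  if Rle_dec t 0 then A else if Rle_dec 1 t then B else P t.

Lemma pw_derive A B P P' t :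
  (forall x, is_derive P x (P' x)) -> P 0 = A -> P 1 = B -> P' 0 = 0 -> P' 1 = 0 ->
  is_derive (pw A B P) t (pw 0 0 P' t).
Proof.
  intros HD H0 H1 H0' H1'.
  assert (Hc : forall c x, is_derive (fun _ : R => c) x 0).
  { intros c x. apply (is_derive_const c x). }
  destruct (Rlt_or_le t 0) as [Hlt|Hge].
  - replace (pw 0 0 P' t) with 0 by (unfold pw; destruct (Rle_dec t 0); [reflexivity|lra]).
    apply (is_derive_ext_loc (fun _ => A)); [|apply Hc].
    apply (filter_imp (fun y => t - 1 < y < 0)); [|apply locally_interval; lra].
    intros y Hy. unfold pw. destruct (Rle_dec y 0); [reflexivity|lra].
  - destruct (Req_dec t 0) as [E|Hne].
    + subst t. replace (pw 0 0 P' 0) with 0 by (unfold pw; destruct (Rle_dec 0 0); [reflexivity|lra]).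
      apply (glue_derive _ (fun _ => A) P 0 0).
      * intros x Hx. unfold pw. destruct (Rle_dec x 0); [reflexivity|lra].
      * intros x Hx. unfold pw. destruct (Rle_dec x 0).
        -- assert (x = 0) by lra. subst x; auto.
        -- destruct (Rle_dec 1 x); [lra|reflexivity].
      * apply Hc.
      * pose proof (HD 0) as Hd0; rewrite H0' in Hd0; exact Hd0.
    + assert (Hpos : 0 < t) by lra. clear Hge Hne.
      destruct (Rlt_or_le t 1) as [Hlt1|Hge1].
      * replace (pw 0 0 P' t) with (P' t) by (unfold pw; destruct (Rle_dec t 0); [lra|]; destruct (Rle_dec 1 t); [lra|reflexivity]).
        apply (is_derive_ext_loc P); [|apply HD].
        apply (filter_imp (fun y => 0 < y < 1)); [|apply locally_interval; lra].
        intros y Hy. unfold pw. destruct (Rle_dec y 0); [lra|]. destruct (Rle_dec 1 y); [lra|reflexivity].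
      * destruct (Req_dec t 1) as [E|Hne].
        -- subst t. replace (pw 0 0 P' 1) with 0 by (unfold pw; destruct (Rle_dec 1 0); [lra|]; destruct (Rle_dec 1 1); [reflexivity|lra]).
           apply (glue_derive _ P (fun _ => B) 1 0).
           ++ intros x Hx. unfold pw. destruct (Rle_dec x 0); [lra|].
              destruct (Rle_dec 1 x).
              ** assert (x = 1) by lra. subst x; auto.
              ** reflexivity.
           ++ intros x Hx. unfold pw. destruct (Rle_dec x 0); [lra|].
              destruct (Rle_dec 1 x); [reflexivity|lra].
           ++ pose proof (HD 1) as Hd1; rewrite H1' in Hd1; exact Hd1.
           ++ apply Hc.
        -- replace (pw 0 0 P' t) with 0 by (unfold pw; destruct (Rle_dec t 0); [lra|]; destruct (Rle_dec 1 t); [reflexivity|lra]).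
           apply (is_derive_ext_loc (fun _ => B)); [|apply Hc].
           apply (filter_imp (fun y => 1 < y < t + 1)); [|apply locally_interval; lra].
           intros y Hy. unfold pw. destruct (Rle_dec y 0); [lra|]. destruct (Rle_dec 1 y); [reflexivity|lra].
Qed.

Lemma pw_cont P t : (forall x, continuous P x) -> P 0 = 0 -> P 1 = 0 ->
  continuous (pw 0 0 P) t.
Proof.
  intros HC H0 H1.
  assert (Hc : forall x, continuous (fun _ : R => 0) x) by (intros; apply continuous_const).
  destruct (Rlt_or_le t 0) as [Hlt|Hge].
  - apply (continuous_ext_loc _ (fun _ => 0)); [|apply Hc].
    apply (filter_imp (fun y => t - 1 < y < 0)); [|apply locally_interval; lra].
    intros y Hy. unfold pw. destruct (Rle_dec y 0); [reflexivity|lra].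
  - destruct (Req_dec t 0) as [E|Hne].
    + subst t. apply (glue_cont _ 0 (fun _ => 0) P).
      * intros x Hx. unfold pw. destruct (Rle_dec x 0); [reflexivity|lra].
      * intros x Hx. unfold pw. destruct (Rle_dec x 0).
        -- assert (x = 0) by lra. subst x; auto.
        -- destruct (Rle_dec 1 x); [lra|reflexivity].
      * apply Hc.
      * apply HC.
    + assert (Hpos : 0 < t) by lra. clear Hge Hne.
      destruct (Rlt_or_le t 1) as [Hlt1|Hge1].
      * apply (continuous_ext_loc _ P); [|apply HC].
        apply (filter_imp (fun y => 0 < y < 1)); [|apply locally_interval; lra].
        intros y Hy. unfold pw. destruct (Rle_dec y 0); [lra|]. destruct (Rle_dec 1 y); [lra|reflexivity].
      * destruct (Req_dec t 1) as [E|Hne].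
        -- subst t. apply (glue_cont _ 1 P (fun _ => 0)).
           ++ intros x Hx. unfold pw. destruct (Rle_dec x 0); [lra|].
              destruct (Rle_dec 1 x).
              ** assert (x = 1) by lra. subst x; auto.
              ** reflexivity.
           ++ intros x Hx. unfold pw. destruct (Rle_dec x 0); [lra|].
              destruct (Rle_dec 1 x); [reflexivity|lra].
           ++ apply HC.
           ++ apply Hc.
        -- apply (continuous_ext_loc _ (fun _ => 0)); [|apply Hc].
           apply (filter_imp (fun y => 1 < y < t + 1)); [|apply locally_interval; lra].
           intros y Hy. unfold pw. destruct (Rle_dec y 0); [lra|]. destruct (Rle_dec 1 y); [reflexivity|lra].
Qed.

Definition qq (t : R) := t * (1 - t).
Definition p0 (t : R) := 35 * t^4 - 84 * t^5 + 70 * t^6 - 20 * t^7.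
Definition p1 (t : R) := 140 * qq t ^ 3.
Definition p2 (t : R) := 420 * qq t ^ 2 * (1 - 2 * t).
Definition p3 (t : R) := 840 * qq t * (1 - 5 * qq t).

Definition s0 := pw 0 1 p0.
Definition s1 := pw 0 0 p1.
Definition s2 := pw 0 0 p2.
Definition s3 := pw 0 0 p3.

Lemma s0_d t : is_derive s0 t (s1 t).
Proof.
  apply pw_derive; unfold p0, p1, qq.
  intros x. auto_derive; auto. ring.
  all: simpl; ring.
Qed.
Lemma s1_d t : is_derive s1 t (s2 t).
Proof.
  apply pw_derive; unfold p1, p2, qq.
  intros x. auto_derive; auto. ring.
  all: simpl; ring.
Qed.
Lemma s2_d t : is_derive s2 t (s3 t).
Proof.
  apply pw_derive; unfold p2, p3, qq.
  intros x. auto_derive; auto. ring.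
  all: simpl; ring.
Qed.
Lemma s3_c t : continuous s3 t.
Proof.
  apply pw_cont; unfold p3, qq.
  intros x. apply (ex_derive_continuous (fun x => 840 * (x * (1 - x)) * (1 - 5 * (x * (1 - x))))).
  auto_derive; auto.
  all: simpl; ring.
Qed.

Lemma qq_bnd t : 0 < t < 1 -> 0 <= qq t <= 1/4.
Proof. intros. unfold qq. split. apply Rmult_le_pos; lra. pose proof (pow2_ge_0 (t - 1/2)). nra. Qed.

Lemma s0_bnd t : 0 <= s0 t <= 1.
Proof.
  unfold s0, pw. destruct (Rle_dec t 0); [lra|]. destruct (Rle_dec 1 t); [lra|].
  assert (E1 : p0 t = t^4 * (1 + 4*(1-t) + 10*(1-t)^2 + 20*(1-t)^3)) by (unfold p0; ring).
  assert (E2 : 1 - p0 t = (1-t)^4 * (1 + 4*t + 10*t^2 + 20*t^3)) by (unfold p0; ring).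
  assert (0 < t) by lra. assert (0 < 1 - t) by lra.
  split.
  - rewrite E1. apply Rmult_le_pos. apply pow_le; lra.
    assert (0 <= (1-t)^2) by (apply pow_le; lra). assert (0 <= (1-t)^3) by (apply pow_le; lra). lra.
  - assert (0 <= 1 - p0 t); [|lra]. rewrite E2. apply Rmult_le_pos. apply pow_le; lra.
    assert (0 <= t^2) by (apply pow_le; lra). assert (0 <= t^3) by (apply pow_le; lra). lra.
Qed.

Lemma s1_bnd t : Rabs (s1 t) <= 3.
Proof.
  unfold s1, pw. destruct (Rle_dec t 0). rewrite Rabs_R0; lra.
  destruct (Rle_dec 1 t). rewrite Rabs_R0; lra.
  destruct (qq_bnd t) as [A B]; [lra|]. unfold p1. rewrite Rabs_pos_eq.
  - assert (qq t ^ 3 <= (1/4)^3) by (apply pow_incr; lra). lra.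
  - apply Rmult_le_pos; [lra|]. apply pow_le; lra.
Qed.

Lemma s2_bnd t : Rabs (s2 t) <= 27.
Proof.
  unfold s2, pw. destruct (Rle_dec t 0). rewrite Rabs_R0; lra.
  destruct (Rle_dec 1 t). rewrite Rabs_R0; lra.
  destruct (qq_bnd t) as [A B]; [lra|]. unfold p2.
  assert (qq t ^ 2 <= (1/4)^2) by (apply pow_incr; lra).
  assert (0 <= qq t ^ 2) by (apply pow_le; lra).
  rewrite Rabs_mult, (Rabs_pos_eq (420 * _)) by lra.
  assert (Rabs (1 - 2*t) <= 1) by (apply Rabs_le; lra).
  assert (Rabs (1 - 2*t) >= 0) by (apply Rle_ge, Rabs_pos). nra.
Qed.

Lemma s3_bnd t : Rabs (s3 t) <= 60.
Proof.
  unfold s3, pw. destruct (Rle_dec t 0). rewrite Rabs_R0; lra.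
  destruct (Rle_dec 1 t). rewrite Rabs_R0; lra.
  destruct (qq_bnd t) as [A B]; [lra|]. unfold p3.
  apply Rabs_le. nra.
Qed.

Lemma s1_out t : t <= 0 \/ 1 <= t -> s1 t = 0.
Proof. intros H. unfold s1, pw. destruct (Rle_dec t 0); auto. destruct (Rle_dec 1 t); auto. lra. Qed.
Lemma s2_out t : t <= 0 \/ 1 <= t -> s2 t = 0.
Proof. intros H. unfold s2, pw. destruct (Rle_dec t 0); auto. destruct (Rle_dec 1 t); auto. lra. Qed.
Lemma s3_out t : t <= 0 \/ 1 <= t -> s3 t = 0.
Proof. intros H. unfold s3, pw. destruct (Rle_dec t 0); auto. destruct (Rle_dec 1 t); auto. lra. Qed.
Lemma s0_neg t : t <= 0 -> s0 t = 0.
Proof. intros H. unfold s0, pw. destruct (Rle_dec t 0); auto. lra. Qed.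
Lemma s0_one t : 1 <= t -> s0 t = 1.
Proof. intros H. unfold s0, pw. destruct (Rle_dec t 0). lra. destruct (Rle_dec 1 t); auto. lra. Qed.


Lemma d_plus f g x df dg : is_derive f x df -> is_derive g x dg ->
  is_derive (fun t => f t + g t) x (df + dg).
Proof. intros. apply (is_derive_plus f g); auto. Qed.
Lemma d_mult f g x df dg : is_derive f x df -> is_derive g x dg ->
  is_derive (fun t => f t * g t) x (df * g x + f x * dg).
Proof. intros. apply (is_derive_mult f g); auto. intros; apply Rmult_comm. Qed.
Lemma d_comp (f g : R -> R) x df dg : is_derive f (g x) df -> is_derive g x dg ->
  is_derive (fun t => f (g t)) x (dg * df).
Proof. intros. apply (is_derive_comp f g); auto. Qed.
Lemma d_inv f x df : is_derive f x df -> f x <> 0 ->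
  is_derive (fun t => / f t) x (- df / (f x)^2).
Proof. intros H Hn. apply (is_derive_inv f); auto. Qed.
Lemma d_const (c x : R) : is_derive (fun _ => c) x 0.
Proof. apply (is_derive_const c x). Qed.
Lemma d_id (x : R) : is_derive (fun t => t) x 1.
Proof. apply (is_derive_id x). Qed.

Lemma cont_of_d (f f' : R -> R) x : is_derive f x (f' x) -> continuous f x.
Proof. intros H. apply (ex_derive_continuous f). exists (f' x). exact H. Qed.

Ltac splits := repeat match goal with |- _ /\ _ => split end.

Definition jcont (E : R -> R -> R) := forall x v,
  continuous (fun p : R * R => E (fst p) (snd p)) (x, v).

Lemma jcont_at (E : R -> R -> R) p : jcont E -> continuous (fun p : R * R => E (fst p) (snd p)) p.
Proof. intros H. destruct p. apply H. Qed.

Lemma jc_plus E F : jcont E -> jcont F -> jcont (fun x v => E x v + F x v).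
Proof. intros HE HF x v. apply (continuous_plus (fun p : R * R => E (fst p) (snd p)) (fun p : R * R => F (fst p) (snd p))); auto. Qed.
Lemma jc_mult E F : jcont E -> jcont F -> jcont (fun x v => E x v * F x v).
Proof. intros HE HF x v. apply (continuous_mult (fun p : R * R => E (fst p) (snd p)) (fun p : R * R => F (fst p) (snd p))); auto. Qed.
Lemma jc_ext E F : jcont E -> (forall x v, E x v = F x v) -> jcont F.
Proof.
  intros HE He x v. apply (continuous_ext (fun p : R * R => E (fst p) (snd p))); auto.
Qed.
Lemma jc_opp E : jcont E -> jcont (fun x v => - E x v).
Proof. intros HE x v. apply (continuous_opp (fun p : R * R => E (fst p) (snd p))); auto. Qed.
Lemma jc_sq E : jcont E -> jcont (fun x v => E x v ^ 2).
Proof. intros HE. apply (jc_ext (fun x v => E x v * E x v)). apply jc_mult; auto. intros; ring. Qed.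

Lemma jc_const c : jcont (fun _ _ => c).
Proof. intros x v. apply continuous_const. Qed.
Lemma jc_x : jcont (fun x _ => x).
Proof. intros x v. apply continuous_fst. Qed.
Lemma jc_v : jcont (fun _ v => v).
Proof. intros x v. apply continuous_snd. Qed.
Lemma jc_comp (f : R -> R) E : (forall y, continuous f y) -> jcont E -> jcont (fun x v => f (E x v)).
Proof.
  intros Hf HE x v. apply (continuous_comp (fun p : R * R => E (fst p) (snd p)) f); auto.
Qed.
Lemma jc_inv E : jcont E -> (forall x v, E x v <> 0) -> jcont (fun x v => / E x v).
Proof.
  intros HE Hn x v. apply (continuous_comp (fun p : R * R => E (fst p) (snd p)) Rinv); auto.
  apply continuous_Rinv. apply Hn.
Qed.

Definition C1d (E : R -> R -> R) := exists Ex Ev : R -> R -> R,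
  (forall x v, is_derive (fun t => E t v) x (Ex x v)) /\
  (forall x v, is_derive (fun t => E x t) v (Ev x v)) /\
  jcont E /\ jcont Ex /\ jcont Ev.

Lemma C1d_jc E : C1d E -> jcont E.
Proof. intros (?&?&?&?&?&?&?); auto. Qed.

Lemma C1d_const c : C1d (fun _ _ => c).
Proof.
  exists (fun _ _ => 0), (fun _ _ => 0). splits; intros; try apply d_const; apply jc_const.
Qed.
Lemma C1d_fx (f f' : R -> R) : (forall x, is_derive f x (f' x)) -> (forall x, continuous f' x) ->
  C1d (fun x _ => f x).
Proof.
  intros Hd Hc. exists (fun x _ => f' x), (fun _ _ => 0). splits.
  - intros; apply Hd.
  - intros; apply d_const.
  - apply (jc_comp f (fun x _ => x)); [|apply jc_x]. intros y; apply (cont_of_d f f'); apply Hd.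
  - apply (jc_comp f' (fun x _ => x)); [auto|apply jc_x].
  - apply jc_const.
Qed.
Lemma C1d_v : C1d (fun _ v => v).
Proof.
  exists (fun _ _ => 0), (fun _ _ => 1). splits; intros.
  apply d_const. apply d_id. apply jc_v. apply jc_const. apply jc_const.
Qed.
Lemma C1d_plus E F : C1d E -> C1d F -> C1d (fun x v => E x v + F x v).
Proof.
  intros (Ex&Ev&H1&H2&H3&H4&H5) (Fx&Fv&G1&G2&G3&G4&G5).
  exists (fun x v => Ex x v + Fx x v), (fun x v => Ev x v + Fv x v). splits.
  - intros; apply (d_plus (fun t => E t v) (fun t => F t v)); auto.
  - intros; apply (d_plus (fun t => E x t) (fun t => F x t)); auto.
  - apply jc_plus; auto.
  - apply jc_plus; auto.
  - apply jc_plus; auto.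
Qed.
Lemma C1d_mult E F : C1d E -> C1d F -> C1d (fun x v => E x v * F x v).
Proof.
  intros (Ex&Ev&H1&H2&H3&H4&H5) (Fx&Fv&G1&G2&G3&G4&G5).
  exists (fun x v => Ex x v * F x v + E x v * Fx x v), (fun x v => Ev x v * F x v + E x v * Fv x v).
  splits.
  - intros; apply (d_mult (fun t => E t v) (fun t => F t v)); auto.
  - intros; apply (d_mult (fun t => E x t) (fun t => F x t)); auto.
  - apply jc_mult; auto.
  - apply jc_plus; apply jc_mult; auto.
  - apply jc_plus; apply jc_mult; auto.
Qed.
Lemma C1d_comp (f f' : R -> R) E : (forall x, is_derive f x (f' x)) -> (forall x, continuous f' x) ->
  C1d E -> C1d (fun x v => f (E x v)).
Proof.
  intros Hd Hc (Ex&Ev&H1&H2&H3&H4&H5).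
  exists (fun x v => Ex x v * f' (E x v)), (fun x v => Ev x v * f' (E x v)). splits.
  - intros; apply (d_comp f (fun t => E t v)); auto.
  - intros; apply (d_comp f (fun t => E x t)); auto.
  - apply jc_comp; auto. intros y; apply (cont_of_d f f'); apply Hd.
  - apply jc_mult; auto. apply jc_comp; auto.
  - apply jc_mult; auto. apply jc_comp; auto.
Qed.
Lemma C1d_inv E : C1d E -> (forall x v, E x v <> 0) -> C1d (fun x v => / E x v).
Proof.
  intros (Ex&Ev&H1&H2&H3&H4&H5) Hn.
  exists (fun x v => - Ex x v * / (E x v ^ 2)), (fun x v => - Ev x v * / (E x v ^ 2)). splits.
  - intros; apply (d_inv (fun t => E t v)); auto.
  - intros; apply (d_inv (fun t => E x t)); auto.
  - apply jc_inv; auto.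
  - apply jc_mult. apply jc_opp; auto. apply jc_inv. apply jc_sq; auto.
    intros x v. apply pow_nonzero; auto.
  - apply jc_mult. apply jc_opp; auto. apply jc_inv. apply jc_sq; auto.
    intros x v. apply pow_nonzero; auto.
Qed.


Definition C1p (g : pt -> R) := exists g1 g2 : pt -> R,
  (forall p, is_derive (fun t => g (t, snd p)) (fst p) (g1 p)) /\
  (forall p, is_derive (fun t => g (fst p, t)) (snd p) (g2 p)) /\
  (forall p, continuous g p) /\
  (forall p, continuous g1 p) /\ (forall p, continuous g2 p).

Definition C2p (g : pt -> R) := exists g1 g2 : pt -> R,
  (forall p, is_derive (fun t => g (t, snd p)) (fst p) (g1 p)) /\
  (forall p, is_derive (fun t => g (fst p, t)) (snd p) (g2 p)) /\
  (forall p, continuous g p) /\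
  C1p g1 /\ C1p g2.

Lemma d1_eq g g1 : (forall p, is_derive (fun t => g (t, snd p)) (fst p) (g1 p)) -> Defs.d1 g = g1.
Proof. intros H. apply functional_extensionality. intros p. unfold Defs.d1. apply is_derive_unique. apply H. Qed.
Lemma d2_eq g g2 : (forall p, is_derive (fun t => g (fst p, t)) (snd p) (g2 p)) -> Defs.d2 g = g2.
Proof. intros H. apply functional_extensionality. intros p. unfold Defs.d2. apply is_derive_unique. apply H. Qed.

Lemma C1p_on U g : C1p g -> C1_on U g.
Proof.
  intros (g1&g2&H1&H2&H0&H3&H4) p _.
  rewrite (d1_eq g g1 H1), (d2_eq g g2 H2).
  split; [exists (g1 p); apply H1|]. split; [exists (g2 p); apply H2|].
  split; apply cont_to_cont_at; auto.
Qed.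

Lemma C1p_cont g : C1p g -> forall p, continuous g p.
Proof. intros (g1&g2&H1&H2&H0&H3&H4); auto. Qed.

Lemma C2p_on U g : C2p g -> C2_on U g.
Proof.
  intros (g1&g2&H1&H2&H0&H3&H4). split; [|split].
  - apply C1p_on. exists g1, g2. splits; auto; apply C1p_cont; auto.
  - rewrite (d1_eq g g1 H1). apply C1p_on; auto.
  - rewrite (d2_eq g g2 H2). apply C1p_on; auto.
Qed.

Definition C2d (E : R -> R -> R) := exists Ex Ev : R -> R -> R,
  (forall x v, is_derive (fun t => E t v) x (Ex x v)) /\
  (forall x v, is_derive (fun t => E x t) v (Ev x v)) /\
  jcont E /\ C1d Ex /\ C1d Ev.

Lemma C1d_C1p E : C1d E -> C1p (fun p => E (fst p) (snd p)).
Proof.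
  intros (Ex&Ev&H1&H2&H3&H4&H5).
  exists (fun p => Ex (fst p) (snd p)), (fun p => Ev (fst p) (snd p)).
  splits; intros p; try apply jcont_at; auto; simpl; auto.
Qed.

Lemma C2d_C2p E : C2d E -> C2p (fun p => E (fst p) (snd p)).
Proof.
  intros (Ex&Ev&H1&H2&H3&H4&H5).
  exists (fun p => Ex (fst p) (snd p)), (fun p => Ev (fst p) (snd p)).
  splits; try (intros p; apply jcont_at); auto; try apply C1d_C1p; auto; intros p; simpl; auto.
Qed.


Lemma chain2 (E Ex Ev : R -> R -> R) (Y : R -> R) w y' :
  (forall x v, is_derive (fun t => E t v) x (Ex x v)) ->
  (forall x v, is_derive (fun t => E x t) v (Ev x v)) ->
  jcont Ex -> is_derive Y w y' ->
  is_derive (fun t => E (Y t) t) w (Ex (Y w) w * y' + Ev (Y w) w).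
Proof.
  intros H1 H2 Hc HY.
  assert (HF := is_derive_filterdiff E (Y w) w Ex (Ev (Y w) w)).
  assert (HF' : filterdiff (fun u : R * R => E (fst u) (snd u)) (locally (Y w, w))
     (fun u : R * R => plus (scal (fst u) (Ex (Y w) w)) (scal (snd u) (Ev (Y w) w)))).
  { apply HF.
    - apply filter_forall. intros u. apply H1.
    - apply H2.
    - apply Hc. }
  assert (Hid : is_derive (fun t : R => t) w 1) by apply d_id.
  unfold is_derive in *.
  pose proof (filterdiff_comp'_2 Y (fun t : R => t) E w _ _
     (fun a b => plus (scal a (Ex (Y w) w)) (scal b (Ev (Y w) w))) HY Hid HF') as HH.
  eapply filterdiff_ext_lin; [exact HH|].
  intros y. simpl. unfold scal, plus; simpl. unfold mult; simpl. ring.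
Qed.

Lemma mvt_lower (f f' : R -> R) c a b :
  (forall t, is_derive f t (f' t)) -> (forall t, c <= f' t) -> a <= b -> c * (b - a) <= f b - f a.
Proof.
  intros Hd Hc Hab.
  destruct (MVT_gen f a b f') as [z [Hz Heq]].
  - intros; apply Hd.
  - intros x _. apply continuity_pt_filterlim. apply (cont_of_d f f'). apply Hd.
  - rewrite Heq. apply Rmult_le_compat_r; [lra|apply Hc].
Qed.

Lemma mvt_exists (f f' : R -> R) a b :
  (forall t, is_derive f t (f' t)) ->
  exists z, Rmin a b <= z <= Rmax a b /\ f b - f a = f' z * (b - a).
Proof.
  intros Hd. destruct (MVT_gen f a b f') as [z [Hz Heq]].
  - intros; apply Hd.
  - intros x _. apply continuity_pt_filterlim. apply (cont_of_d f f'). apply Hd.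
  - exists z; auto.
Qed.

Lemma mvt_bound (f f' : R -> R) B a b :
  (forall t, is_derive f t (f' t)) -> (forall t, Rabs (f' t) <= B) -> Rabs (f b - f a) <= B * Rabs (b - a).
Proof.
  intros Hd Hb. apply (bounded_variation f f'). intros; split; auto.
Qed.

Lemma implicit_d (K Kx : R -> R -> R) (Y : R -> R) w kw c Lp :
  (forall x w', is_derive (fun t => K t w') x (Kx x w')) ->
  (forall x w', c <= Kx x w') -> 0 < c ->
  is_derive (fun t => K (Y w) t) w kw ->
  continuous (fun p : R * R => Kx (fst p) (snd p)) (Y w, w) ->
  (forall w', Rabs (Y w' - Y w) <= Lp * Rabs (w' - w)) -> 0 <= Lp ->
  (forall w', K (Y w') w' = 0) ->
  is_derive Y w (- kw / Kx (Y w) w).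
Proof.
  intros HKx Hc Hc0 Hkw HKc HL HL0 HK.
  apply is_derive_Reals. apply is_derive_Reals in Hkw.
  set (B := Kx (Y w) w).
  assert (HB : c <= B) by apply Hc.
  intros eps Heps.
  assert (He1 : 0 < eps * c / 2) by (apply Rmult_lt_0_compat; [apply Rmult_lt_0_compat|]; lra).
  destruct (Hkw _ He1) as [d1 Hd1].
  assert (He2 : 0 < eps * (c * c) / (2 * (Rabs kw + 1))).
  { apply Rmult_lt_0_compat. apply Rmult_lt_0_compat; [lra|nra].
    apply Rinv_0_lt_compat. generalize (Rabs_pos kw); lra. }
  destruct (cont2_ed _ _ HKc _ He2) as [rho [Hrho Hr]].
  assert (Hd : 0 < Rmin d1 (rho / (Lp + 1))).
  { apply Rmin_pos. apply cond_pos. apply Rdiv_lt_0_compat; lra. }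
  exists (mkposreal _ Hd). intros t Ht0 Ht. simpl in Ht.
  assert (Ht1 : Rabs t < d1) by (eapply Rlt_le_trans; [exact Ht|apply Rmin_l]).
  assert (Ht2 : Rabs t < rho / (Lp + 1)) by (eapply Rlt_le_trans; [exact Ht|apply Rmin_r]).
  assert (HtL : Lp * Rabs t < rho).
  { assert (Rabs t * (Lp + 1) < rho).
    { apply (Rmult_lt_compat_r (Lp + 1)) in Ht2; [|lra].
      unfold Rdiv in Ht2. rewrite Rmult_assoc, Rinv_l, Rmult_1_r in Ht2; lra. }
    generalize (Rabs_pos t); nra. }
  destruct (mvt_exists (fun x => K x (w + t)) (fun x => Kx x (w + t)) (Y w) (Y (w + t)) (fun x => HKx x (w + t)))
    as [xi [Hxi Hm]].
  set (D := Kx xi (w + t)) in *.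
  assert (HD : c <= D) by apply Hc.
  set (Q := (K (Y w) (w + t) - K (Y w) w) / t).
  assert (HQ : Rabs (Q - kw) < eps * c / 2) by (apply Hd1; auto).
  assert (Hdiff : Y (w + t) - Y w = - (Q * t) / D).
  { assert (HQt : Q * t = K (Y w) (w + t)) by (unfold Q; rewrite (HK w); field; auto).
    rewrite HQt. simpl in Hm. rewrite (HK (w + t)) in Hm.
    apply (Rmult_eq_reg_l D); [|lra].
    replace (D * (- K (Y w) (w + t) / D)) with (- K (Y w) (w + t)) by (field; lra).
    unfold D in *. lra. }
  assert (HYd : Rabs (Y (w + t) - Y w) <= Lp * Rabs t).
  { replace t with ((w + t) - w) at 2 by ring. apply HL. }
  assert (HxiY : Rabs (xi - Y w) < rho).
  { apply Rle_lt_trans with (Rabs (Y (w + t) - Y w)); [|lra].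
    unfold Rmin, Rmax in Hxi. destruct (Rle_dec (Y w) (Y (w + t))).
    - rewrite (Rabs_pos_eq (Y (w + t) - Y w)) by lra. apply Rabs_le; lra.
    - rewrite (Rabs_left1 (Y (w + t) - Y w)) by lra. apply Rabs_le; lra. }
  assert (HDB : Rabs (D - B) < eps * (c * c) / (2 * (Rabs kw + 1))).
  { apply (Hr (xi, w + t)); simpl; auto.
    replace (w + t - w) with t by ring.
    assert (1 <= Lp + 1) by lra.
    apply Rlt_le_trans with (rho / (Lp + 1)); auto.
    unfold Rdiv. rewrite <- (Rmult_1_r rho) at 2. apply Rmult_le_compat_l; [lra|].
    rewrite <- Rinv_1. apply Rinv_le_contravar; lra. }
  replace ((Y (w + t) - Y w) / t - - kw / B) with ((kw * (D - B) + B * (kw - Q)) / (D * B)).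
  2:{ rewrite Hdiff. field. split; [lra|split; [lra|auto]]. }
  assert (HDB0 : 0 < D * B) by nra.
  unfold Rdiv. rewrite Rabs_mult, (Rabs_inv (D * B)), (Rabs_pos_eq (D * B)) by lra.
  apply Rle_lt_trans with ((Rabs kw * Rabs (D - B) + B * Rabs (kw - Q)) * / (D * B)).
  { apply Rmult_le_compat_r. left; apply Rinv_0_lt_compat; lra.
    eapply Rle_trans; [apply Rabs_triang|]. rewrite !Rabs_mult, (Rabs_pos_eq B) by lra. lra. }
  rewrite Rmult_plus_distr_r.
  assert (T1 : Rabs kw * Rabs (D - B) * / (D * B) <= eps / 2).
  { apply Rle_trans with (Rabs kw * Rabs (D - B) * / (c * c)).
    - apply Rmult_le_compat_l. apply Rmult_le_pos; apply Rabs_pos.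
      apply Rinv_le_contravar. nra. apply Rmult_le_compat; lra.
    - apply (Rmult_le_reg_r (c * c)); [nra|]. rewrite Rmult_assoc, Rinv_l, Rmult_1_r by nra.
      assert (Rabs kw * Rabs (D - B) <= (Rabs kw + 1) * (eps * (c * c) / (2 * (Rabs kw + 1)))).
      { apply Rmult_le_compat; try apply Rabs_pos; try lra. }
      replace ((Rabs kw + 1) * (eps * (c * c) / (2 * (Rabs kw + 1)))) with (eps / 2 * (c * c)) in H
        by (field; generalize (Rabs_pos kw); lra). lra. }
  assert (T2 : B * Rabs (kw - Q) * / (D * B) < eps / 2).
  { replace (B * Rabs (kw - Q) * / (D * B)) with (Rabs (kw - Q) / D) by (field; lra).
    rewrite Rabs_minus_sym.
    apply Rle_lt_trans with (Rabs (Q - kw) / c).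
    - unfold Rdiv. apply Rmult_le_compat_l. apply Rabs_pos. apply Rinv_le_contravar; lra.
    - apply (Rmult_lt_reg_r c); auto.
      replace (Rabs (Q - kw) / c * c) with (Rabs (Q - kw)) by (field; lra).
      replace (eps / 2 * c) with (eps * c / 2) by field. lra. }
  lra.
Qed.


Lemma d_eq (f : R -> R) (x l1 l2 : R) : is_derive f x l1 -> l1 = l2 -> is_derive f x l2.
Proof. intros H E; subst; auto. Qed.
Lemma d_sub f g x df dg : is_derive f x df -> is_derive g x dg ->
  is_derive (fun t => f t - g t) x (df - dg).
Proof. intros. apply (is_derive_minus f g); auto. Qed.
Lemma d_cmul (c : R) f x df : is_derive f x df -> is_derive (fun t => c * f t) x (c * df).
Proof. intros. apply (is_derive_scal f); auto. Qed.

Lemma C1d_ext E F : C1d E -> (forall x v, E x v = F x v) -> C1d F.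
Proof.
  intros H He. replace F with E; auto.
  apply functional_extensionality; intros x; apply functional_extensionality; intros v; auto.
Qed.
Lemma C1d_sub E F : C1d E -> C1d F -> C1d (fun x v => E x v - F x v).
Proof.
  intros HE HF. apply (C1d_ext (fun x v => E x v + (-1) * F x v)).
  apply C1d_plus; auto. apply C1d_mult; auto. apply C1d_const. intros; ring.
Qed.
Lemma C1d_x : C1d (fun x _ => x).
Proof.
  apply (C1d_fx (fun x => x) (fun _ => 1)). intros; apply d_id. intros; apply continuous_const.
Qed.

Definition chi (L y : R) := y * L ^ 2 / (L ^ 2 + y ^ 2).
Definition chi1 (L y : R) := L ^ 2 * (L ^ 2 - y ^ 2) / (L ^ 2 + y ^ 2) ^ 2.
Definition chi2 (L y : R) := 2 * L ^ 2 * y * (y ^ 2 - 3 * L ^ 2) / (L ^ 2 + y ^ 2) ^ 3.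

Section ChiL.
Variable L : R.
Hypothesis HL : 0 < L.

Lemma den_pos y : 0 < L ^ 2 + y ^ 2.
Proof. assert (0 < L ^ 2) by (apply pow_lt; lra). assert (0 <= y ^ 2) by apply pow2_ge_0. lra. Qed.

Lemma chi_d y : is_derive (chi L) y (chi1 L y).
Proof.
  unfold chi, chi1. assert (H := den_pos y). auto_derive.
  - lra.
  - field. lra.
Qed.
Lemma chi1_d y : is_derive (chi1 L) y (chi2 L y).
Proof.
  unfold chi1, chi2. assert (H := den_pos y). simpl in H. auto_derive.
  - apply Rgt_not_eq. apply Rmult_lt_0_compat; nra.
  - field. lra.
Qed.
Lemma chi2_c y : continuous (chi2 L) y.
Proof.
  apply (ex_derive_continuous (chi2 L)). unfold chi2. assert (H := den_pos y). simpl in H. auto_derive.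
  apply Rgt_not_eq. apply Rmult_lt_0_compat; [lra|]. apply Rmult_lt_0_compat; nra.
Qed.
Lemma chi_0 : chi L 0 = 0.
Proof. unfold chi. field. assert (H := den_pos 0). lra. Qed.

Lemma chi_abs y : Rabs (chi L y) <= Rabs y.
Proof.
  unfold chi. assert (H := den_pos y). unfold Rdiv.
  rewrite Rabs_mult, Rabs_mult, (Rabs_pos_eq (L ^ 2)) by (apply pow_le; lra).
  rewrite Rabs_inv, (Rabs_pos_eq (L ^ 2 + y ^ 2)) by lra.
  rewrite Rmult_assoc. rewrite <- (Rmult_1_r (Rabs y)) at 2. apply Rmult_le_compat_l. apply Rabs_pos.
  apply (Rmult_le_reg_r (L ^ 2 + y ^ 2)); auto. rewrite Rmult_assoc, Rinv_l by lra.
  assert (0 <= y ^ 2) by apply pow2_ge_0. lra.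
Qed.

Lemma chi_bnd y : Rabs (chi L y) <= L / 2.
Proof.
  unfold chi. assert (H := den_pos y). unfold Rdiv.
  rewrite Rabs_mult, Rabs_mult, (Rabs_pos_eq (L ^ 2)) by (apply pow_le; lra).
  rewrite Rabs_inv, (Rabs_pos_eq (L ^ 2 + y ^ 2)) by lra.
  apply (Rmult_le_reg_r (L ^ 2 + y ^ 2)); auto. rewrite Rmult_assoc, Rinv_l by lra.
  rewrite Rmult_1_r.
  assert (y ^ 2 = Rabs y ^ 2) by (rewrite pow2_abs; auto). rewrite H0.
  assert (0 <= (L - Rabs y) ^ 2) by apply pow2_ge_0. generalize (Rabs_pos y). nra.
Qed.

Lemma chi1_bnd y : Rabs (chi1 L y) <= 1.
Proof.
  unfold chi1. assert (H := den_pos y).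
  assert (H2 : 0 < (L ^ 2 + y ^ 2) ^ 2) by (apply pow_lt; lra).
  unfold Rdiv. rewrite Rabs_mult, Rabs_inv, (Rabs_pos_eq ((L ^ 2 + y ^ 2) ^ 2)) by lra.
  apply (Rmult_le_reg_r ((L ^ 2 + y ^ 2) ^ 2)); auto. rewrite Rmult_assoc, Rinv_l by lra.
  rewrite Rmult_1_r, Rmult_1_l. rewrite Rabs_mult, (Rabs_pos_eq (L ^ 2)) by (apply pow_le; lra).
  assert (0 <= L ^ 2) by (apply pow_le; lra). assert (0 <= y ^ 2) by apply pow2_ge_0.
  apply Rabs_le in H1 || idtac.
  destruct (Rle_dec (y ^ 2) (L ^ 2)).
  - rewrite Rabs_pos_eq by lra. nra.
  - rewrite Rabs_left1 by lra. nra.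
Qed.

Lemma one_minus_chi1 y : Rabs (1 - chi1 L y) <= 3 * y ^ 2 / L ^ 2 + y ^ 4 / L ^ 4.
Proof.
  assert (H := den_pos y). assert (HL2 : 0 < L ^ 2) by (apply pow_lt; lra).
  assert (E : 1 - chi1 L y = (3 * L ^ 2 * y ^ 2 + y ^ 4) / (L ^ 2 + y ^ 2) ^ 2).
  { unfold chi1. field. lra. }
  rewrite E. assert (0 <= y ^ 2) by apply pow2_ge_0.
  assert (0 <= y ^ 4) by (replace (y ^ 4) with ((y^2)^2) by ring; apply pow2_ge_0).
  rewrite Rabs_pos_eq.
  2:{ apply Rdiv_le_0_compat; [nra|apply pow_lt; lra]. }
  apply Rle_trans with ((3 * L ^ 2 * y ^ 2 + y ^ 4) / (L ^ 2) ^ 2).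
  - unfold Rdiv. apply Rmult_le_compat_l; [nra|]. apply Rinv_le_contravar. apply pow_lt; lra.
    apply pow_incr. lra.
  - right. field. lra.
Qed.
End ChiL.


Section Bent.
Variables (L B1 B2 : R) (h h1 h2 h3 : R -> R).
Hypothesis HL : 0 < L.
Hypothesis Hh0 : forall x, is_derive h x (h1 x).
Hypothesis Hh1 : forall x, is_derive h1 x (h2 x).
Hypothesis Hh2 : forall x, is_derive h2 x (h3 x).
Hypothesis Hh3 : forall x, continuous h3 x.
Hypothesis Hb1 : forall x, Rabs (h1 x) <= B1.
Hypothesis Hb2 : forall x, Rabs (h2 x) <= B2.
Hypothesis HB1 : 0 <= B1 <= 1/2.
Hypothesis HB2 : L * B2 <= 1/2.

Definition bF (p : pt) : pt := (fst p - chi L (snd p) * h1 (fst p), snd p + h (fst p)).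

Lemma h2_c x : continuous h2 x.
Proof. apply (cont_of_d h2 h3). apply Hh2. Qed.
Lemma h1_c x : continuous h1 x.
Proof. apply (cont_of_d h1 h2). apply Hh1. Qed.

Lemma C1d_h1 : C1d (fun x _ => h1 x).
Proof. apply (C1d_fx h1 h2); auto. apply h2_c. Qed.
Lemma C1d_h2 : C1d (fun x _ => h2 x).
Proof. apply (C1d_fx h2 h3); auto. Qed.
Lemma C1d_h : C1d (fun x _ => h x).
Proof. apply (C1d_fx h h1); auto. apply h1_c. Qed.
Lemma C1d_chi E : C1d E -> C1d (fun x v => chi L (E x v)).
Proof. intros. apply (C1d_comp (chi L) (chi1 L)); auto. apply chi_d; auto.
  intros; apply (cont_of_d _ (chi2 L)); apply chi1_d; auto. Qed.
Lemma C1d_chi1 E : C1d E -> C1d (fun x v => chi1 L (E x v)).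
Proof. intros. apply (C1d_comp (chi1 L) (chi2 L)); auto. apply chi1_d; auto.
  intros; apply chi2_c; auto. Qed.
Lemma C1d_y_chi : C1d (fun _ y => chi L y).
Proof. apply C1d_chi. apply C1d_v. Qed.
Lemma C1d_y_chi1 : C1d (fun _ y => chi1 L y).
Proof. apply C1d_chi1. apply C1d_v. Qed.

Lemma C2d_F1 : C2d (fun x y => x - chi L y * h1 x).
Proof.
  exists (fun x y => 1 - chi L y * h2 x), (fun x y => - (chi1 L y * h1 x)). splits.
  - intros x y. eapply d_eq; [apply d_sub; [apply d_id | apply d_cmul; apply Hh1] | ring].
  - intros x y. eapply d_eq; [apply d_sub; [apply d_const|
    apply (d_mult (chi L) (fun _ => h1 x)); [apply chi_d; auto| apply d_const]] | ring].
  - apply C1d_jc. apply C1d_sub. apply C1d_x. apply C1d_mult. apply C1d_y_chi. apply C1d_h1.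
  - apply C1d_sub. apply C1d_const. apply C1d_mult. apply C1d_y_chi. apply C1d_h2.
  - apply (C1d_ext (fun x y => (-1) * (chi1 L y * h1 x))). apply C1d_mult. apply C1d_const.
    apply C1d_mult. apply C1d_y_chi1. apply C1d_h1. intros; ring.
Qed.

Lemma C2d_F2 : C2d (fun x y => y + h x).
Proof.
  exists (fun x y => h1 x), (fun x y => 1). splits.
  - intros x y. eapply d_eq; [apply (d_plus (fun _ => y) h); [apply d_const| apply Hh0] | ring].
  - intros x y. eapply d_eq; [apply (d_plus (fun t => t) (fun _ => h x)); [apply d_id| apply d_const] | ring].
  - apply C1d_jc. apply C1d_plus. apply C1d_v. apply C1d_h.
  - apply C1d_h1.
  - apply C1d_const.
Qed.

Lemma bF_C2 : C2_near (fun _ => True) bF /\ forall S, C2_near S bF.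
Proof.
  assert (H1 : C2_on (fun _ => True) (comp1 bF)).
  { apply C2p_on. apply (C2d_C2p (fun x y => x - chi L y * h1 x)). apply C2d_F1. }
  assert (H2 : C2_on (fun _ => True) (comp2 bF)).
  { apply C2p_on. apply (C2d_C2p (fun x y => y + h x)). apply C2d_F2. }
  split; [|intros S]; exists (fun _ => True); splits; auto;
    intros p _; exists 1; split; auto; lra.
Qed.

Definition Phi x v := x - chi L (v - h x) * h1 x.
Definition Phix x v := 1 + chi1 L (v - h x) * h1 x ^ 2 - chi L (v - h x) * h2 x.
Definition Phiv x v := - (chi1 L (v - h x) * h1 x).

Lemma Phi_dx x v : is_derive (fun t => Phi t v) x (Phix x v).
Proof.
  unfold Phi, Phix. eapply d_eq.
  - apply d_sub. apply d_id. apply (d_mult (fun t => chi L (v - h t)) h1).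
    + apply (d_comp (chi L) (fun t => v - h t)). apply chi_d; auto.
      apply d_sub. apply d_const. apply Hh0.
    + apply Hh1.
  - ring.
Qed.
Lemma Phi_dv x v : is_derive (fun t => Phi x t) v (Phiv x v).
Proof.
  unfold Phi, Phiv. eapply d_eq.
  - apply d_sub. apply d_const. apply (d_mult (fun t => chi L (t - h x)) (fun _ => h1 x)).
    + apply (d_comp (chi L) (fun t => t - h x)). apply chi_d; auto.
      apply d_sub. apply d_id. apply d_const.
    + apply d_const.
  - ring.
Qed.

Lemma h1sq x : h1 x ^ 2 <= B1 ^ 2.
Proof. rewrite <- (pow2_abs (h1 x)). apply pow_incr. split; [apply Rabs_pos|auto]. Qed.

Lemma Phix_ge x v : 1/2 <= Phix x v.
Proof.
  unfold Phix. assert (A1 := chi1_bnd L HL (v - h x)). assert (A2 := chi_bnd L HL (v - h x)).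
  assert (A3 := h1sq x). assert (A4 := Hb2 x). assert (A5 : 0 <= h1 x ^ 2) by apply pow2_ge_0.
  assert (T1 : Rabs (chi1 L (v - h x) * h1 x ^ 2) <= B1 ^ 2).
  { rewrite Rabs_mult, (Rabs_pos_eq (h1 x ^ 2)) by auto.
    apply Rle_trans with (1 * h1 x ^ 2); [|lra]. apply Rmult_le_compat_r; auto. }
  assert (T2 : Rabs (chi L (v - h x) * h2 x) <= L / 2 * B2).
  { rewrite Rabs_mult. apply Rmult_le_compat; auto; apply Rabs_pos. }
  apply Rabs_le_between in T1. apply Rabs_le_between in T2.
  assert (B1 ^ 2 <= 1/4) by (simpl; nra). lra.
Qed.
Lemma Phix_pos x v : Phix x v <> 0.
Proof. assert (H := Phix_ge x v). lra. Qed.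
Lemma Phiv_bnd x v : Rabs (Phiv x v) <= B1.
Proof.
  unfold Phiv. rewrite Rabs_Ropp, Rabs_mult. rewrite <- (Rmult_1_l B1).
  apply Rmult_le_compat; auto; try apply Rabs_pos. apply chi1_bnd; auto.
Qed.
Lemma Phi_near x v : Rabs (Phi x v - x) <= L / 2 * B1.
Proof.
  unfold Phi. replace (x - chi L (v - h x) * h1 x - x) with (- (chi L (v - h x) * h1 x)) by ring.
  rewrite Rabs_Ropp, Rabs_mult. apply Rmult_le_compat; auto; try apply Rabs_pos. apply chi_bnd; auto.
Qed.

Lemma C1d_vh : C1d (fun x v => v - h x).
Proof. apply C1d_sub. apply C1d_v. apply C1d_h. Qed.
Lemma C1d_Phix : C1d Phix.
Proof.
  unfold Phix. apply C1d_sub. apply C1d_plus. apply C1d_const.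
  apply C1d_mult. apply C1d_chi1. apply C1d_vh.
  apply (C1d_ext (fun x v => h1 x * h1 x)). apply C1d_mult; apply C1d_h1. intros; ring.
  apply C1d_mult. apply C1d_chi. apply C1d_vh. apply C1d_h2.
Qed.
Lemma C1d_Phiv : C1d Phiv.
Proof.
  unfold Phiv. apply (C1d_ext (fun x v => (-1) * (chi1 L (v - h x) * h1 x))).
  apply C1d_mult. apply C1d_const. apply C1d_mult. apply C1d_chi1. apply C1d_vh. apply C1d_h1.
  intros; ring.
Qed.

Lemma Phi_mono a b v : a <= b -> 1/2 * (b - a) <= Phi b v - Phi a v.
Proof.
  intros Hab. apply (mvt_lower (fun t => Phi t v) (fun t => Phix t v)); auto.
  intros; apply Phi_dx. intros; apply Phix_ge.
Qed.
Lemma Phi_inj a b v : Phi a v = Phi b v -> a = b.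
Proof.
  intros E. destruct (Rle_dec a b).
  - assert (H := Phi_mono a b v r). lra.
  - assert (H := Phi_mono b a v ltac:(lra)). lra.
Qed.

Lemma Phi_root_ex u v : exists x, Phi x v = u.
Proof.
  set (C := L / 2 * B1).
  assert (HC : 0 <= C) by (unfold C; apply Rmult_le_pos; lra).
  assert (Ha := Phi_near (u - C - 1) v). assert (Hb := Phi_near (u + C + 1) v).
  apply Rabs_le_between in Ha. apply Rabs_le_between in Hb. fold C in Ha, Hb.
  destruct (IVT_gen (fun t => Phi t v) (u - C - 1) (u + C + 1) u) as [x [_ Hx]].
  - intros t. apply continuity_pt_filterlim. apply (cont_of_d (fun t => Phi t v) (fun t => Phix t v)). apply Phi_dx.
  - split.
    + apply Rle_trans with (Phi (u - C - 1) v). apply Rmin_l. lra.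
    + apply Rle_trans with (Phi (u + C + 1) v). lra. apply Rmax_r.
  - exists x; auto.
Qed.

Definition X u v := epsilon (inhabits 0) (fun x => Phi x v = u).
Lemma X_spec u v : Phi (X u v) v = u.
Proof. unfold X. apply (epsilon_spec (inhabits 0) (fun x => Phi x v = u)). apply Phi_root_ex. Qed.
Lemma X_unique x u v : Phi x v = u -> X u v = x.
Proof. intros H. apply (Phi_inj _ _ v). rewrite X_spec. auto. Qed.

Lemma X_lip u1 v1 u2 v2 : Rabs (X u1 v1 - X u2 v2) <= 2 * Rabs (u1 - u2) + 2 * B1 * Rabs (v1 - v2).
Proof.
  set (x1 := X u1 v1). set (x2 := X u2 v2).
  assert (E1 : Phi x1 v1 = u1) by apply X_spec.
  assert (E2 : Phi x2 v2 = u2) by apply X_spec.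
  assert (M : Rabs (Phi x2 v1 - Phi x2 v2) <= B1 * Rabs (v1 - v2)).
  { apply (mvt_bound (fun t => Phi x2 t) (fun t => Phiv x2 t)). intros; apply Phi_dv. intros; apply Phiv_bnd. }
  assert (K : 1/2 * Rabs (x1 - x2) <= Rabs (Phi x1 v1 - Phi x2 v1)).
  { destruct (Rle_dec x2 x1).
    - assert (H := Phi_mono x2 x1 v1 r). rewrite !Rabs_pos_eq; lra.
    - assert (H := Phi_mono x1 x2 v1 ltac:(lra)). rewrite !Rabs_left1; lra. }
  rewrite E1 in K.
  assert (Rabs (u1 - Phi x2 v1) <= Rabs (u1 - u2) + B1 * Rabs (v1 - v2)).
  { replace (u1 - Phi x2 v1) with ((u1 - u2) - (Phi x2 v1 - Phi x2 v2)) by (rewrite <- E2; ring).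
    eapply Rle_trans. apply Rabs_triang. rewrite Rabs_Ropp. lra. }
  lra.
Qed.

Lemma X_cont p : continuous (fun p : R * R => X (fst p) (snd p)) p.
Proof.
  apply ed_cont2. intros eps Heps.
  exists (eps / (2 + 2 * B1 + 1)). split. apply Rdiv_lt_0_compat; lra.
  intros q H1 H2. eapply Rle_lt_trans. apply X_lip.
  assert (E : eps = (2 + 2 * B1 + 1) * (eps / (2 + 2 * B1 + 1))) by (field; lra).
  set (d := eps / (2 + 2 * B1 + 1)) in *.
  assert (0 < d) by (unfold d; apply Rdiv_lt_0_compat; lra).
  destruct p as [p1 p2]; destruct q as [q1 q2]; simpl in *.
  assert (2 * B1 * Rabs (q2 - p2) <= 2 * B1 * d) by (apply Rmult_le_compat_l; lra).
  lra.
Qed.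

Lemma Phix_jc x w : continuous (fun p : R * R => Phix (fst p) (snd p)) (x, w).
Proof. apply C1d_jc. apply C1d_Phix. Qed.

Lemma X_du u v : is_derive (fun t => X t v) u (/ Phix (X u v) v).
Proof.
  eapply d_eq.
  - apply (implicit_d (fun x w => Phi x v - w) (fun x w => Phix x v) (fun t => X t v) u (-1) (1/2) 2).
    + intros x w'. eapply d_eq; [apply d_sub; [apply Phi_dx|apply d_const]|ring].
    + intros; apply Phix_ge.
    + lra.
    + eapply d_eq; [apply d_sub; [apply d_const|apply d_id]|ring].
    + apply (continuous_comp_2 fst (fun _ => v) Phix). apply continuous_fst.
      apply continuous_const. simpl. apply Phix_jc.
    + intros w'. eapply Rle_trans. apply X_lip. rewrite Rminus_diag, Rabs_R0. lra.
    + lra.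
    + intros w'. rewrite X_spec. ring.
  - field. apply Phix_pos.
Qed.

Lemma X_dv u v : is_derive (fun t => X u t) v (- Phiv (X u v) v * / Phix (X u v) v).
Proof.
  eapply d_eq.
  - apply (implicit_d (fun x w => Phi x w - u) Phix (fun t => X u t) v (Phiv (X u v) v) (1/2) (2 * B1)).
    + intros x w'. eapply d_eq; [apply d_sub; [apply Phi_dx|apply d_const]|ring].
    + intros; apply Phix_ge.
    + lra.
    + eapply d_eq; [apply d_sub; [apply Phi_dv|apply d_const]|ring].
    + apply Phix_jc.
    + intros w'. eapply Rle_trans. apply X_lip. rewrite Rminus_diag, Rabs_R0. lra.
    + lra.
    + intros w'. rewrite X_spec. ring.
  - field. apply Phix_pos.
Qed.

Lemma contX E : jcont E -> forall p, continuous (fun p : R * R => E (X (fst p) (snd p)) (snd p)) p.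
Proof.
  intros HE p. apply (continuous_comp_2 (fun p : R * R => X (fst p) (snd p)) snd E).
  apply X_cont. destruct p; apply continuous_snd. apply HE.
Qed.

Lemma compX_C1 E : C1d E -> C1p (fun p => E (X (fst p) (snd p)) (snd p)).
Proof.
  intros HE. pose proof HE as (Ex&Ev&H1&H2&H3&H4&H5).
  exists (fun p => Ex (X (fst p) (snd p)) (snd p) * / Phix (X (fst p) (snd p)) (snd p)).
  exists (fun p => Ex (X (fst p) (snd p)) (snd p) * (- Phiv (X (fst p) (snd p)) (snd p) * / Phix (X (fst p) (snd p)) (snd p))
                   + Ev (X (fst p) (snd p)) (snd p)).
  splits.
  - intros [u v]. simpl. eapply d_eq.
    + apply (d_comp (fun x => E x v) (fun t => X t v)). apply H1. apply X_du.
    + ring.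
  - intros [u v]. simpl. apply (chain2 E Ex Ev (fun t => X u t)); [exact H1 | exact H2 | exact H4 | apply X_dv].
  - apply contX; auto.
  - apply (contX (fun x v => Ex x v * / Phix x v)). apply jc_mult; auto.
    apply jc_inv. apply C1d_jc, C1d_Phix. apply Phix_pos.
  - apply (contX (fun x v => Ex x v * (- Phiv x v * / Phix x v) + Ev x v)). apply jc_plus; auto.
    apply jc_mult; auto. apply jc_mult. apply jc_opp. apply C1d_jc, C1d_Phiv.
    apply jc_inv. apply C1d_jc, C1d_Phix. apply Phix_pos.
Qed.

Lemma C1d_iPhix : C1d (fun x v => / Phix x v).
Proof. apply C1d_inv. apply C1d_Phix. apply Phix_pos. Qed.

Lemma compX_C2 E : C2d E -> C2p (fun p => E (X (fst p) (snd p)) (snd p)).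
Proof.
  intros (Ex&Ev&H1&H2&H3&H4&H5).
  exists (fun p => (fun x v => Ex x v * / Phix x v) (X (fst p) (snd p)) (snd p)).
  exists (fun p => (fun x v => Ex x v * (- Phiv x v * / Phix x v) + Ev x v) (X (fst p) (snd p)) (snd p)).
  splits.
  - intros [u v]. simpl. eapply d_eq.
    + apply (d_comp (fun x => E x v) (fun t => X t v)). apply H1. apply X_du.
    + ring.
  - intros [u v]. simpl. apply (chain2 E Ex Ev (fun t => X u t)); [exact H1 | exact H2 | apply C1d_jc; exact H4 | apply X_dv].
  - apply contX; exact H3.
  - apply (compX_C1 (fun x v => Ex x v * / Phix x v)). apply C1d_mult. exact H4. apply C1d_iPhix.
  - apply (compX_C1 (fun x v => Ex x v * (- Phiv x v * / Phix x v) + Ev x v)). apply C1d_plus; [|exact H5]. apply C1d_mult; [exact H4|]. apply C1d_mult; [|apply C1d_iPhix].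
    apply (C1d_ext (fun x v => (-1) * Phiv x v)). apply C1d_mult. apply C1d_const. apply C1d_Phiv.
    intros; ring.
Qed.

Definition bG (p : pt) : pt := (X (fst p) (snd p), snd p - h (X (fst p) (snd p))).

Lemma bG_bF p : bG (bF p) = p.
Proof.
  destruct p as [x y]. unfold bG, bF. simpl.
  assert (E : X (x - chi L y * h1 x) (y + h x) = x).
  { apply X_unique. unfold Phi. replace (y + h x - h x) with y by ring. reflexivity. }
  rewrite E. f_equal. ring.
Qed.

Lemma bG_C2 S : C2_near S bG.
Proof.
  exists (fun _ => True). splits; auto.
  - intros p _. exists 1; split; auto; lra.
  - apply C2p_on. apply (compX_C2 (fun x v => x)).
    exists (fun _ _ => 1), (fun _ _ => 0). splits.
    + intros; apply d_id. + intros; apply d_const. + apply jc_x. + apply C1d_const. + apply C1d_const.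
  - apply C2p_on. apply (compX_C2 (fun x v => v - h x)).
    exists (fun x _ => - h1 x), (fun _ _ => 1). splits.
    + intros x v. eapply d_eq; [apply d_sub; [apply d_const|apply Hh0]|ring].
    + intros x v. eapply d_eq; [apply d_sub; [apply d_id|apply d_const]|ring].
    + apply C1d_jc, C1d_vh.
    + apply (C1d_ext (fun x v => (-1) * h1 x)). apply C1d_mult. apply C1d_const. apply C1d_h1. intros; ring.
    + apply C1d_const.
Qed.

Lemma bF_diffeo S : C2_diffeo_onto_image S bF.
Proof.
  split. apply bF_C2. exists bG. split. intros p _. apply bG_bF. apply bG_C2.
Qed.
End Bent.


Lemma enorm_triang a1 a2 b1 b2 :
  sqrt ((a1 + b1) ^ 2 + (a2 + b2) ^ 2) <= sqrt (a1 ^ 2 + a2 ^ 2) + sqrt (b1 ^ 2 + b2 ^ 2).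
Proof.
  set (A := a1 ^ 2 + a2 ^ 2). set (B := b1 ^ 2 + b2 ^ 2).
  assert (HA : 0 <= A) by (unfold A; nra). assert (HB : 0 <= B) by (unfold B; nra).
  assert (HsA := sqrt_pos A). assert (HsB := sqrt_pos B).
  rewrite <- (sqrt_Rsqr (sqrt A + sqrt B)) by lra.
  apply sqrt_le_1_alt. unfold Rsqr.
  replace ((sqrt A + sqrt B) * (sqrt A + sqrt B)) with (A + B + 2 * (sqrt A * sqrt B))
    by (rewrite <- (sqrt_sqrt A) at 1 by lra; rewrite <- (sqrt_sqrt B) at 1 by lra; ring).
  rewrite <- sqrt_mult by lra.
  assert (CS : a1 * b1 + a2 * b2 <= sqrt (A * B)).
  { destruct (Rle_dec (a1 * b1 + a2 * b2) 0). apply Rle_trans with 0; auto. apply sqrt_pos.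
    rewrite <- (sqrt_Rsqr (a1 * b1 + a2 * b2)) by lra. apply sqrt_le_1_alt. unfold Rsqr, A, B.
    pose proof (pow2_ge_0 (a1 * b2 - a2 * b1)). nra. }
  unfold A, B in *. nra.
Qed.

Lemma enorm_sub_pair a1 a2 b1 b2 :
  sqrt (a1 ^ 2 + a2 ^ 2) - sqrt (b1 ^ 2 + b2 ^ 2) <= sqrt ((a1 - b1) ^ 2 + (a2 - b2) ^ 2).
Proof.
  pose proof (enorm_triang (a1 - b1) (a2 - b2) b1 b2).
  replace (a1 - b1 + b1) with a1 in H by ring. replace (a2 - b2 + b2) with a2 in H by ring. lra.
Qed.

Section Bounds.
Variables (L th : R) (h h1 h2 h3 : R -> R).
Hypothesis HL : 1 <= L.
Hypothesis Hth : 0 < th <= 1/100.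
Hypothesis HLth : 1 / L <= th.
Hypothesis Hh0 : forall x, is_derive h x (h1 x).
Hypothesis Hh1 : forall x, is_derive h1 x (h2 x).
Hypothesis Hh2 : forall x, is_derive h2 x (h3 x).
Hypothesis Hb1 : forall x, Rabs (h1 x) <= 3 * th.
Hypothesis Hb2 : forall x, Rabs (h2 x) <= 27 * th / L.
Hypothesis Hb3 : forall x, Rabs (h3 x) <= 60 * th / L ^ 2.

Let F := bF L h h1.

Lemma F_d11 : Defs.d1 (comp1 F) = fun p => 1 - chi L (snd p) * h2 (fst p).
Proof.
  apply d1_eq. intros [x y]. unfold comp1, F, bF. simpl.
  eapply d_eq; [apply d_sub; [apply d_id | apply d_cmul; apply Hh1] | ring].
Qed.
Lemma F_d21 : Defs.d2 (comp1 F) = fun p => - (chi1 L (snd p) * h1 (fst p)).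
Proof.
  apply d2_eq. intros [x y]. unfold comp1, F, bF. simpl.
  eapply d_eq; [apply d_sub; [apply d_const|
    apply (d_mult (chi L) (fun _ => h1 x)); [apply chi_d; lra| apply d_const]] | ring].
Qed.
Lemma F_d12 : Defs.d1 (comp2 F) = fun p => h1 (fst p).
Proof.
  apply d1_eq. intros [x y]. unfold comp2, F, bF. simpl.
  eapply d_eq; [apply (d_plus (fun _ => y) h); [apply d_const| apply Hh0] | ring].
Qed.
Lemma F_d22 : Defs.d2 (comp2 F) = fun p => 1.
Proof.
  apply d2_eq. intros [x y]. unfold comp2, F, bF. simpl.
  eapply d_eq; [apply (d_plus (fun t => t) (fun _ => h x)); [apply d_id| apply d_const] | ring].
Qed.

Lemma hess1 : forall x, hess_sq (comp1 F) x =
  (- (chi L (snd x) * h3 (fst x))) ^ 2 + (- (chi1 L (snd x) * h2 (fst x))) ^ 2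
  + (- (chi1 L (snd x) * h2 (fst x))) ^ 2 + (- (chi2 L (snd x) * h1 (fst x))) ^ 2.
Proof.
  intros p. unfold hess_sq. rewrite F_d11, F_d21.
  replace (Defs.d1 (fun p => 1 - chi L (snd p) * h2 (fst p))) with (fun p : pt => - (chi L (snd p) * h3 (fst p))).
  replace (Defs.d2 (fun p => 1 - chi L (snd p) * h2 (fst p))) with (fun p : pt => - (chi1 L (snd p) * h2 (fst p))).
  replace (Defs.d1 (fun p => - (chi1 L (snd p) * h1 (fst p)))) with (fun p : pt => - (chi1 L (snd p) * h2 (fst p))).
  replace (Defs.d2 (fun p => - (chi1 L (snd p) * h1 (fst p)))) with (fun p : pt => - (chi2 L (snd p) * h1 (fst p))).
  reflexivity.
  - symmetry. apply d2_eq. intros [x y]. simpl.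
    eapply d_eq; [apply (is_derive_opp (fun t => chi1 L t * h1 x)); 
      apply (d_mult (chi1 L) (fun _ => h1 x)); [apply chi1_d; lra| apply d_const] | simpl; unfold opp; simpl; ring].
  - symmetry. apply d1_eq. intros [x y]. simpl.
    eapply d_eq; [apply (is_derive_opp (fun t => chi1 L y * h1 t)); apply d_cmul; apply Hh1 | simpl; unfold opp; simpl; ring].
  - symmetry. apply d2_eq. intros [x y]. simpl.
    eapply d_eq; [apply d_sub; [apply d_const|
      apply (d_mult (chi L) (fun _ => h2 x)); [apply chi_d; lra| apply d_const]] | ring].
  - symmetry. apply d1_eq. intros [x y]. simpl.
    eapply d_eq; [apply d_sub; [apply d_const| apply d_cmul; apply Hh2] | ring].
Qed.

Lemma hess2 : forall x, hess_sq (comp2 F) x = (h2 (fst x)) ^ 2 + 0 ^ 2 + 0 ^ 2 + 0 ^ 2.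
Proof.
  intros p. unfold hess_sq. rewrite F_d12, F_d22.
  replace (Defs.d1 (fun p => h1 (fst p))) with (fun p : pt => h2 (fst p)).
  replace (Defs.d2 (fun p => h1 (fst p))) with (fun p : pt => 0).
  replace (Defs.d1 (fun p : pt => 1)) with (fun p : pt => 0).
  replace (Defs.d2 (fun p : pt => 1)) with (fun p : pt => 0).
  reflexivity.
  - symmetry. apply d2_eq. intros q; apply (d_const 1).
  - symmetry. apply d1_eq. intros q; apply (d_const 1).
  - symmetry. apply d2_eq. intros q; apply (d_const (h1 (fst q))).
  - symmetry. apply d1_eq. intros [x y]; apply Hh1.
Qed.

Lemma iL_pos : 0 < 1 / L.
Proof. apply Rdiv_lt_0_compat; lra. Qed.
Lemma iL_le1 : 1 / L <= 1.
Proof. unfold Rdiv. rewrite Rmult_1_l. rewrite <- Rinv_1. apply Rinv_le_contravar; lra. Qed.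

Lemma sq_le (a b : R) : Rabs a <= b -> a ^ 2 <= b ^ 2.
Proof. intros H. rewrite <- (pow2_abs a). apply pow_incr. split; auto. apply Rabs_pos. Qed.

Lemma sqrt_le_K (A K : R) : A <= K ^ 2 -> 0 <= K -> sqrt A <= K.
Proof.
  intros H HK. rewrite <- (sqrt_pow2 K HK). apply sqrt_le_1_alt. auto.
Qed.

Lemma chi2_small y : Rabs y <= L -> Rabs (chi2 L y) <= 6 * Rabs y / L ^ 2.
Proof.
  intros Hy. assert (HL0 : 0 < L) by lra.
  assert (HD := den_pos L HL0 y).
  assert (HL2 : 0 < L ^ 2) by (apply pow_lt; lra).
  assert (Hy2 : y ^ 2 <= L ^ 2) by (rewrite <- (pow2_abs y); apply pow_incr; split; [apply Rabs_pos|auto]).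
  assert (Hy0 : 0 <= y ^ 2) by apply pow2_ge_0.
  unfold chi2. unfold Rdiv. rewrite !Rabs_mult. rewrite Rabs_inv.
  rewrite (Rabs_pos_eq ((L ^ 2 + y ^ 2) ^ 3)) by (apply pow_le; lra).
  rewrite (Rabs_pos_eq 2) by lra. rewrite (Rabs_pos_eq (L ^ 2)) by lra.
  assert (A : Rabs (y ^ 2 - 3 * L ^ 2) <= 3 * L ^ 2) by (apply Rabs_le; lra).
  assert (B : / (L ^ 2 + y ^ 2) ^ 3 <= / (L ^ 2) ^ 3).
  { apply Rinv_le_contravar. apply pow_lt; lra. apply pow_incr; lra. }
  assert (Hinv : 0 <= / (L ^ 2 + y ^ 2) ^ 3) by (left; apply Rinv_0_lt_compat, pow_lt; lra).
  apply Rle_trans with (2 * L ^ 2 * Rabs y * (3 * L ^ 2) * / (L ^ 2) ^ 3).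
  - apply Rmult_le_compat; try apply Rmult_le_pos; try apply Rmult_le_pos; try lra; try apply Rabs_pos.
    apply Rmult_le_compat_l; auto. apply Rmult_le_pos; [lra|apply Rabs_pos].
  - right. field. lra.
Qed.

Lemma hess_bnd x : Rabs (snd x) <= 2 * th * L -> d2norm F x <= 134 * th ^ 2.
Proof.
  intros Hy. unfold d2norm. rewrite hess1, hess2.
  assert (HL0 : 0 < L) by lra. set (y := snd x) in *. set (u := fst x).
  assert (I1 := iL_pos). assert (I2 := iL_le1).
  assert (Hc : Rabs (chi L y) <= 2 * th * L) by (eapply Rle_trans; [apply chi_abs; lra|auto]).
  assert (Hc1 := chi1_bnd L HL0 y).
  assert (HyL : Rabs y <= L) by nra.
  assert (Hc2 := chi2_small y HyL).
  assert (E1 : Rabs (- (chi L y * h3 u)) <= 120 * th ^ 2).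
  { rewrite Rabs_Ropp, Rabs_mult.
    apply Rle_trans with (2 * th * L * (60 * th / L ^ 2)).
    apply Rmult_le_compat; auto; apply Rabs_pos.
    replace (2 * th * L * (60 * th / L ^ 2)) with (120 * th ^ 2 * (1 / L)) by (field; lra).
    assert (0 <= th ^ 2) by apply pow2_ge_0. nra. }
  assert (E2 : Rabs (- (chi1 L y * h2 u)) <= 27 * th ^ 2).
  { rewrite Rabs_Ropp, Rabs_mult.
    apply Rle_trans with (1 * (27 * th / L)).
    apply Rmult_le_compat; auto; apply Rabs_pos.
    replace (1 * (27 * th / L)) with (27 * th * (1 / L)) by (field; lra). nra. }
  assert (E3 : Rabs (- (chi2 L y * h1 u)) <= 36 * th ^ 2).
  { rewrite Rabs_Ropp, Rabs_mult.
    apply Rle_trans with (6 * (2 * th * L) / L ^ 2 * (3 * th)).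
    apply Rmult_le_compat; try apply Rabs_pos; auto.
    eapply Rle_trans; [apply Hc2|]. unfold Rdiv. apply Rmult_le_compat_r.
    left; apply Rinv_0_lt_compat, pow_lt; lra. lra.
    replace (6 * (2 * th * L) / L ^ 2 * (3 * th)) with (36 * th ^ 2 * (1 / L)) by (field; lra).
    assert (0 <= th ^ 2) by apply pow2_ge_0. nra. }
  assert (E4 : Rabs (h2 u) <= 27 * th ^ 2).
  { eapply Rle_trans. apply Hb2. replace (27 * th / L) with (27 * th * (1 / L)) by (field; lra). nra. }
  apply sq_le in E1. apply sq_le in E2. apply sq_le in E3. apply sq_le in E4.
  apply sqrt_le_K; [|assert (0 <= th ^ 2) by apply pow2_ge_0; lra].
  assert (0 <= th ^ 2) by apply pow2_ge_0.
  replace ((120 * th ^ 2) ^ 2) with (14400 * (th ^ 2) ^ 2) in E1 by ring.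
  replace ((27 * th ^ 2) ^ 2) with (729 * (th ^ 2) ^ 2) in E2, E4 by ring.
  replace ((36 * th ^ 2) ^ 2) with (1296 * (th ^ 2) ^ 2) in E3 by ring.
  replace ((134 * th ^ 2) ^ 2) with (17956 * (th ^ 2) ^ 2) by ring.
  assert (0 <= (th ^ 2) ^ 2) by apply pow2_ge_0.
  simpl (0 ^ 2). lra.
Qed.

Lemma c_bounds u : let c := / sqrt (1 + u ^ 2) in 0 <= 1 - c <= u ^ 2 /\ c * c * (1 + u ^ 2) = 1.
Proof.
  intros c. assert (Hu : 0 <= u ^ 2) by apply pow2_ge_0.
  assert (Hr1 : 1 <= sqrt (1 + u ^ 2)) by (apply Rle_trans with (sqrt 1); [rewrite sqrt_1; lra | apply sqrt_le_1_alt; lra]).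
  assert (Hr2 : sqrt (1 + u ^ 2) <= 1 + u ^ 2).
  { apply sqrt_le_K; [nra|lra]. }
  assert (Hs := sqrt_sqrt (1 + u ^ 2) ltac:(lra)).
  split; [split|].
  - unfold c. assert (/ sqrt (1 + u ^ 2) <= 1). { apply Rle_trans with (/ 1); [apply Rinv_le_contravar; lra | rewrite Rinv_1; lra]. } lra.
  - unfold c. apply Rle_trans with (sqrt (1 + u ^ 2) - 1); [|lra].
    apply (Rmult_le_reg_r (sqrt (1 + u ^ 2))); [lra|].
    replace ((1 - / sqrt (1 + u ^ 2)) * sqrt (1 + u ^ 2)) with (sqrt (1 + u ^ 2) - 1) by (field; lra).
    nra.
  - unfold c. rewrite <- Rinv_mult. rewrite Hs. field. lra.
Qed.

Lemma jac_bnd x : Rabs (snd x) <= 2 * th * L ->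
  exists J, in_O2 J /\ mnorm (mdiff (jac F x) J) <= 66 * th ^ 2.
Proof.
  intros Hy. assert (HL0 : 0 < L) by lra.
  set (u := h1 (fst x)). set (c := / sqrt (1 + u ^ 2)). set (s := u * c).
  destruct (c_bounds u) as [[C1 C2] C3]. fold c in C1, C2, C3.
  exists (Mat2 c (- s) s c). split.
  - unfold in_O2; simpl. unfold s. split; [|split]; nra.
  - unfold mnorm, mdiff, jac. simpl. rewrite F_d11, F_d21, F_d12, F_d22. simpl. fold u.
    set (y := snd x) in *.
    assert (I1 := iL_pos). assert (I2 := iL_le1).
    assert (Hu : Rabs u <= 3 * th) by apply Hb1.
    assert (Hu2 : u ^ 2 <= 9 * th ^ 2) by (replace (9 * th ^ 2) with ((3 * th) ^ 2) by ring; apply sq_le; auto).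
    assert (Hth2 : 0 <= th ^ 2) by apply pow2_ge_0.
    assert (Hus : Rabs (u - s) <= th ^ 2).
    { unfold s. replace (u - u * c) with (u * (1 - c)) by ring. rewrite Rabs_mult, (Rabs_pos_eq (1 - c)) by lra.
      apply Rle_trans with (3 * th * (9 * th ^ 2)). apply Rmult_le_compat; try apply Rabs_pos; lra.
      assert (th * th <= th * (1/100)) by nra. simpl. nra. }
    assert (Hc : Rabs (chi L y) <= 2 * th * L) by (eapply Rle_trans; [apply chi_abs; lra|auto]).
    assert (E11 : Rabs (1 - chi L y * h2 (fst x) - c) <= 63 * th ^ 2).
    { replace (1 - chi L y * h2 (fst x) - c) with ((1 - c) - chi L y * h2 (fst x)) by ring.
      eapply Rle_trans. apply Rabs_triang. rewrite Rabs_Ropp, Rabs_pos_eq by lra.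
      rewrite Rabs_mult. assert (Rabs (chi L y) * Rabs (h2 (fst x)) <= 2 * th * L * (27 * th / L)).
      { apply Rmult_le_compat; try apply Rabs_pos; auto. }
      replace (2 * th * L * (27 * th / L)) with (54 * th ^ 2) in H by (field; lra). lra. }
    assert (Hchi1 : Rabs (1 - chi1 L y) <= 13 * th ^ 2).
    { eapply Rle_trans. apply one_minus_chi1; lra.
      assert (Y2 : y ^ 2 <= 4 * th ^ 2 * L ^ 2).
      { replace (4 * th ^ 2 * L ^ 2) with ((2 * th * L) ^ 2) by ring. apply sq_le; auto. }
      assert (Y4 : y ^ 4 <= 16 * th ^ 4 * L ^ 4).
      { replace (y ^ 4) with ((y ^ 2) ^ 2) by ring. replace (16 * th ^ 4 * L ^ 4) with ((4 * th ^ 2 * L ^ 2) ^ 2) by ring.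
        apply pow_incr. split; [apply pow2_ge_0|auto]. }
      assert (HL2 : 0 < L ^ 2) by (apply pow_lt; lra).
      assert (HL4 : 0 < L ^ 4) by (apply pow_lt; lra).
      assert (3 * y ^ 2 / L ^ 2 <= 12 * th ^ 2).
      { apply (Rmult_le_reg_r (L ^ 2)); auto. replace (3 * y ^ 2 / L ^ 2 * L ^ 2) with (3 * y ^ 2) by (field; lra). nra. }
      assert (y ^ 4 / L ^ 4 <= th ^ 2).
      { apply (Rmult_le_reg_r (L ^ 4)); auto. replace (y ^ 4 / L ^ 4 * L ^ 4) with (y ^ 4) by (field; lra).
        assert (16 * th ^ 4 <= th ^ 2).
        { replace (th ^ 4) with (th ^ 2 * th ^ 2) by ring. assert (th ^ 2 <= 1/16) by (simpl; nra). nra. }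
        assert (16 * th ^ 4 * L ^ 4 <= th ^ 2 * L ^ 4) by (apply Rmult_le_compat_r; lra). lra. }
      lra. }
    assert (E12 : Rabs (- (chi1 L y * u) - - s) <= 14 * th ^ 2).
    { replace (- (chi1 L y * u) - - s) with ((1 - chi1 L y) * u - (u - s)) by ring.
      eapply Rle_trans. apply Rabs_triang. rewrite Rabs_Ropp, Rabs_mult.
      assert (Rabs (1 - chi1 L y) * Rabs u <= 13 * th ^ 2 * 1).
      { apply Rmult_le_compat; try apply Rabs_pos; lra. }
      lra. }
    assert (E21 : Rabs (u - s) <= th ^ 2) by auto.
    assert (E22 : Rabs (1 - c) <= 9 * th ^ 2) by (rewrite Rabs_pos_eq; lra).
    apply sq_le in E11. apply sq_le in E12. apply sq_le in E21. apply sq_le in E22.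
    apply sqrt_le_K; [|lra].
    replace ((63 * th ^ 2) ^ 2) with (3969 * (th ^ 2) ^ 2) in E11 by ring.
    replace ((14 * th ^ 2) ^ 2) with (196 * (th ^ 2) ^ 2) in E12 by ring.
    replace ((th ^ 2) ^ 2) with (1 * (th ^ 2) ^ 2) in E21 by ring.
    replace ((9 * th ^ 2) ^ 2) with (81 * (th ^ 2) ^ 2) in E22 by ring.
    replace ((66 * th ^ 2) ^ 2) with (4356 * (th ^ 2) ^ 2) by ring.
    assert (0 <= (th ^ 2) ^ 2) by apply pow2_ge_0. lra.
Qed.

Lemma bilip p q : edist p q / 2 <= edist (F p) (F q) /\ edist (F p) (F q) <= 2 * edist p q.
Proof.
  assert (HL0 : 0 < L) by lra.
  destruct p as [xp yp]; destruct q as [xq yq].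
  unfold edist, enorm, F, bF; cbn [fst snd].
  set (e1 := chi L yp * h1 xp - chi L yq * h1 xq).
  set (e2 := h xp - h xq).
  replace (xp - chi L yp * h1 xp - (xq - chi L yq * h1 xq)) with ((xp - xq) + - e1) by (unfold e1; ring).
  replace (yp + h xp - (yq + h xq)) with ((yp - yq) + e2) by (unfold e2; ring).
  set (D := sqrt ((xp - xq) ^ 2 + (yp - yq) ^ 2)).
  assert (Hx : Rabs (xp - xq) <= D) by apply Rabs_le_sqrt.
  assert (Hy : Rabs (yp - yq) <= D) by (unfold D; rewrite Rplus_comm; apply Rabs_le_sqrt).
  assert (Hh1d : Rabs (h1 xp - h1 xq) <= 27 * th / L * Rabs (xp - xq)).
  { apply (mvt_bound h1 h2); auto. }
  assert (Hchid : Rabs (chi L yp - chi L yq) <= 1 * Rabs (yp - yq)).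
  { apply (mvt_bound (chi L) (chi1 L)). intros; apply chi_d; lra. intros; apply chi1_bnd; lra. }
  assert (Hhd : Rabs (h xp - h xq) <= 3 * th * Rabs (xp - xq)) by (apply (mvt_bound h h1); auto).
  assert (He1 : Rabs e1 <= 27 / 2 * th * D + 3 * th * D).
  { unfold e1. replace (chi L yp * h1 xp - chi L yq * h1 xq) with (chi L yp * (h1 xp - h1 xq) + h1 xq * (chi L yp - chi L yq)) by ring.
    eapply Rle_trans. apply Rabs_triang. rewrite !Rabs_mult.
    assert (Rabs (chi L yp) * Rabs (h1 xp - h1 xq) <= L / 2 * (27 * th / L * D)).
    { apply Rmult_le_compat; try apply Rabs_pos. apply chi_bnd; lra.
      eapply Rle_trans; [apply Hh1d|]. apply Rmult_le_compat_l; auto.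
      apply Rdiv_le_0_compat; lra. }
    assert (Rabs (h1 xq) * Rabs (chi L yp - chi L yq) <= 3 * th * (1 * D)).
    { apply Rmult_le_compat; try apply Rabs_pos; auto. lra. }
    replace (L / 2 * (27 * th / L * D)) with (27 / 2 * th * D) in H by (field; lra). lra. }
  assert (He2 : Rabs e2 <= 3 * th * D).
  { unfold e2. eapply Rle_trans; [apply Hhd|]. apply Rmult_le_compat_l; lra. }
  assert (HE : sqrt ((- e1) ^ 2 + e2 ^ 2) <= D / 2).
  { eapply Rle_trans. apply sqrt_le_abs_sum. rewrite Rabs_Ropp.
    assert (0 <= D) by apply sqrt_pos. nra. }
  split.
  - assert (T := enorm_sub_pair (xp - xq) (yp - yq) (- (xp - xq + - e1)) (- (yp - yq + e2))).
    assert (T2 := enorm_triang (xp - xq + - e1) (yp - yq + e2) (- e1 * -1) (e2 * -1)).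
    replace (xp - xq + - e1 + - e1 * -1) with (xp - xq) in T2 by ring.
    replace (yp - yq + e2 + e2 * -1) with (yp - yq) in T2 by ring.
    replace ((- e1 * -1) ^ 2 + (e2 * -1) ^ 2) with ((- e1) ^ 2 + e2 ^ 2) in T2 by ring.
    fold D in T2. lra.
  - assert (T2 := enorm_triang (xp - xq) (yp - yq) (- e1) e2). fold D in T2.
    assert (0 <= D) by apply sqrt_pos. lra.
Qed.
End Bounds.


Fixpoint sumK (f : nat -> R) (K : nat) : R :=
  match K with O => 0 | S k => sumK f k + f k end.

Lemma sumK_zero f K : (forall k, (k < K)%nat -> f k = 0) -> sumK f K = 0.
Proof. induction K; simpl; intros H; auto. rewrite IHK, H; [ring|lia|intros; apply H; lia]. Qed.

Lemma sumK_single f K k0 : (k0 < K)%nat -> (forall k, k <> k0 -> f k = 0) -> sumK f K = f k0.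
Proof.
  induction K; intros Hk H; [lia|]. simpl.
  destruct (Nat.eq_dec K k0).
  - subst. rewrite sumK_zero; [ring|]. intros; apply H; lia.
  - rewrite IHK; [|lia|auto]. rewrite (H K); auto. ring.
Qed.

Lemma sumK_abs_single f K k0 : (forall k, k <> k0 -> f k = 0) -> Rabs (sumK f K) <= Rabs (f k0).
Proof.
  intros H. destruct (Nat.lt_ge_cases k0 K).
  - rewrite (sumK_single f K k0); auto. lra.
  - rewrite sumK_zero. rewrite Rabs_R0. apply Rabs_pos. intros; apply H; lia.
Qed.

Lemma sumK_sub f g K : sumK f K - sumK g K = sumK (fun k => f k - g k) K.
Proof. induction K; simpl. ring. rewrite <- IHK. ring. Qed.
Lemma sumK_scal c f K : c * sumK f K = sumK (fun k => c * f k) K.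
Proof. induction K; simpl. ring. rewrite <- IHK. ring. Qed.

Lemma sumK_d (f f' : nat -> R -> R) K x : (forall k, is_derive (f k) x (f' k x)) ->
  is_derive (fun t => sumK (fun k => f k t) K) x (sumK (fun k => f' k x) K).
Proof.
  intros H. induction K; simpl.
  - apply d_const.
  - apply (d_plus (fun t => sumK (fun k => f k t) K) (f K)); auto.
Qed.
Lemma sumK_c (f : nat -> R -> R) K x : (forall k, continuous (f k) x) ->
  continuous (fun t => sumK (fun k => f k t) K) x.
Proof.
  intros H. induction K; simpl.
  - apply continuous_const.
  - apply (continuous_plus (fun t => sumK (fun k => f k t) K) (f K)); auto.
Qed.

Definition bitR (i k : nat) : R := if Nat.testbit i k then 1 else 0.

Section Family.
Variables (L Ra : R) (K i : nat).
Hypothesis HL : 0 < L.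

Definition hh (g : R -> R) (x : R) := sumK (fun k => bitR i k * g (x / L - INR k)) K.

Lemma lin_d (k : R) x : is_derive (fun t => t / L - k) x (/ L).
Proof. auto_derive; auto. field. lra. Qed.

Lemma hh_d g g' x : (forall t, is_derive g t (g' t)) -> is_derive (hh g) x (/ L * hh g' x).
Proof.
  intros Hg. unfold hh. rewrite sumK_scal.
  apply (sumK_d (fun k t => bitR i k * g (t / L - INR k)) (fun k t => / L * (bitR i k * g' (t / L - INR k)))).
  intros k. eapply d_eq.
  - apply d_cmul. apply (d_comp g (fun t => t / L - INR k)). apply Hg. apply lin_d.
  - ring.
Qed.

Lemma hh_c g x : (forall t, continuous g t) -> continuous (hh g) x.
Proof.
  intros Hg. unfold hh.
  apply (sumK_c (fun k t => bitR i k * g (t / L - INR k))). intros k.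
  apply (continuous_mult (fun _ => bitR i k) (fun t => g (t / L - INR k))). apply continuous_const.
  apply (continuous_comp (fun t => t / L - INR k) g); auto.
  apply (cont_of_d _ (fun _ => / L)). apply lin_d.
Qed.

Lemma bitR_01 k : 0 <= bitR i k <= 1.
Proof. unfold bitR. destruct (Nat.testbit i k); lra. Qed.

Lemma hh_bnd g A x : (forall t, t <= 0 \/ 1 <= t -> g t = 0) -> (forall t, Rabs (g t) <= A) ->
  Rabs (hh g x) <= A.
Proof.
  intros Hz Hb. unfold hh.
  assert (Hex : exists k0 : nat, forall k, k <> k0 -> bitR i k * g (x / L - INR k) = 0).
  { destruct (Rlt_or_le (x / L) 0) as [Hn|Hp].
    - exists 0%nat. intros k _. rewrite Hz. ring. left. generalize (pos_INR k). lra.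
    - destruct (nfloor_ex (x / L) Hp) as [n [Hn1 Hn2]]. exists n. intros k Hk. rewrite Hz. ring.
      destruct (Nat.lt_ge_cases k n).
      + right.
        assert (INR k + 1 <= INR n). { rewrite <- S_INR. apply le_INR. lia. } lra.
      + left. assert (INR n + 1 <= INR k). { rewrite <- S_INR. apply le_INR. lia. } lra. }
  destruct Hex as [k0 Hk0].
  eapply Rle_trans. apply (sumK_abs_single _ K k0 Hk0).
  rewrite Rabs_mult. rewrite <- (Rmult_1_l A). apply Rmult_le_compat; try apply Rabs_pos; auto.
  destruct (bitR_01 k0). rewrite Rabs_pos_eq; lra.
Qed.

Definition fh x := Ra * hh s0 x.
Definition fh1 x := Ra / L * hh s1 x.
Definition fh2 x := Ra / L ^ 2 * hh s2 x.
Definition fh3 x := Ra / L ^ 3 * hh s3 x.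

Lemma fh_d x : is_derive fh x (fh1 x).
Proof. unfold fh, fh1. eapply d_eq. apply d_cmul. apply hh_d. apply s0_d. field. lra. Qed.
Lemma fh1_d x : is_derive fh1 x (fh2 x).
Proof. unfold fh1, fh2. eapply d_eq. apply d_cmul. apply hh_d. apply s1_d. field. lra. Qed.
Lemma fh2_d x : is_derive fh2 x (fh3 x).
Proof. unfold fh2, fh3. eapply d_eq. apply d_cmul. apply hh_d. apply s2_d. field. lra. Qed.
Lemma fh3_c x : continuous fh3 x.
Proof.
  unfold fh3. apply (continuous_mult (fun _ => Ra / L ^ 3) (hh s3)). apply continuous_const.
  apply hh_c. apply s3_c.
Qed.

Hypothesis HRa : 0 < Ra.

Lemma fh1_bnd x : Rabs (fh1 x) <= 3 * (Ra / L).
Proof.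
  unfold fh1. rewrite Rabs_mult, Rabs_pos_eq by (apply Rdiv_le_0_compat; lra).
  rewrite Rmult_comm. apply Rmult_le_compat_r. apply Rdiv_le_0_compat; lra.
  apply hh_bnd. apply s1_out. apply s1_bnd.
Qed.
Lemma fh2_bnd x : Rabs (fh2 x) <= 27 * (Ra / L) / L.
Proof.
  assert (0 < L ^ 2) by (apply pow_lt; lra).
  unfold fh2. rewrite Rabs_mult, Rabs_pos_eq by (apply Rdiv_le_0_compat; lra).
  replace (27 * (Ra / L) / L) with (Ra / L ^ 2 * 27) by (field; lra).
  apply Rmult_le_compat_l. apply Rdiv_le_0_compat; lra.
  apply hh_bnd. apply s2_out. apply s2_bnd.
Qed.
Lemma fh3_bnd x : Rabs (fh3 x) <= 60 * (Ra / L) / L ^ 2.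
Proof.
  assert (0 < L ^ 3) by (apply pow_lt; lra).
  unfold fh3. rewrite Rabs_mult, Rabs_pos_eq by (apply Rdiv_le_0_compat; lra).
  replace (60 * (Ra / L) / L ^ 2) with (Ra / L ^ 3 * 60) by (field; lra).
  apply Rmult_le_compat_l. apply Rdiv_le_0_compat; lra.
  apply hh_bnd. apply s3_out. apply s3_bnd.
Qed.

Lemma fh_0 : fh 0 = 0.
Proof.
  unfold fh, hh. rewrite sumK_zero. ring. intros k _. rewrite s0_neg. ring.
  unfold Rdiv. rewrite Rmult_0_l. generalize (pos_INR k). lra.
Qed.
End Family.

Lemma div_le_iff (x c L : R) : 0 < L -> (x / L <= c <-> x <= c * L).
Proof.
  intros HL. split; intros H.
  - apply (Rmult_le_compat_r L) in H; [|lra]. replace (x / L * L) with x in H by (field; lra). lra.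
  - apply (Rmult_le_reg_r L); auto. replace (x / L * L) with x by (field; lra). lra.
Qed.
Lemma div_ge_iff (x c L : R) : 0 < L -> (c <= x / L <-> c * L <= x).
Proof.
  intros HL. split; intros H.
  - apply (Rmult_le_compat_r L) in H; [|lra]. replace (x / L * L) with x in H by (field; lra). lra.
  - apply (Rmult_le_reg_r L); auto. replace (x / L * L) with x by (field; lra). lra.
Qed.

Lemma path_cont (f g : R -> R) : (forall t, continuous f t) -> (forall t, continuous g t) ->
  forall t eps, 0 < eps -> exists del, 0 < del /\ forall s, Rabs (s - t) < del -> edist (f s, g s) (f t, g t) < eps.
Proof.
  intros Hf Hg t eps Heps.
  assert (He2 : 0 < eps / 2) by lra.
  destruct (proj1 (filterlim_locally f (f t)) (Hf t) (mkposreal _ He2)) as [d1 H1].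
  destruct (proj1 (filterlim_locally g (g t)) (Hg t) (mkposreal _ He2)) as [d2 H2].
  exists (Rmin d1 d2). split. apply Rmin_pos; apply cond_pos.
  intros s Hs. eapply Rle_lt_trans. apply edist_le. simpl.
  assert (A : Rabs (f s - f t) < eps / 2).
  { apply (H1 s). change (Rabs (s - t) < d1). eapply Rlt_le_trans; [exact Hs|apply Rmin_l]. }
  assert (B : Rabs (g s - g t) < eps / 2).
  { apply (H2 s). change (Rabs (s - t) < d2). eapply Rlt_le_trans; [exact Hs|apply Rmin_r]. }
  lra.
Qed.

Section Cond2.
Variables (L Ra Rr : R) (K i j k0 : nat).
Hypothesis HL : 0 < L.
Hypothesis HRa : 0 < Ra.
Hypothesis Hk0 : (k0 < K)%nat.
Hypothesis HKR : INR K * L <= Rr.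
Hypothesis Hlow : forall k, (k < k0)%nat -> Nat.testbit i k = Nat.testbit j k.
Hypothesis Hi : Nat.testbit i k0 = true.
Hypothesis Hj : Nat.testbit j k0 = false.

Let T := (INR k0 + 1) * L.

Lemma c2_a x : x <= T -> fh L Ra K i x = fh L Ra K j x + Ra * s0 (x / L - INR k0).
Proof.
  intros Hx. unfold fh, hh.
  assert (E : Ra * sumK (fun k => bitR i k * s0 (x / L - INR k)) K - Ra * sumK (fun k => bitR j k * s0 (x / L - INR k)) K
              = Ra * s0 (x / L - INR k0)).
  { rewrite <- Rmult_minus_distr_l, sumK_sub. f_equal.
    rewrite (sumK_single _ K k0); auto.
    - unfold bitR. rewrite Hi, Hj. ring.
    - intros k Hk. destruct (Nat.lt_ge_cases k k0).
      + unfold bitR. rewrite Hlow; auto. ring.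
      + rewrite s0_neg. ring. apply div_le_iff in Hx; auto.
        assert (INR k0 + 1 <= INR k) by (rewrite <- S_INR; apply le_INR; lia). lra. }
  lra.
Qed.

Lemma c2_b x : INR k0 * L <= x <= T -> fh1 L Ra K j x = 0.
Proof.
  intros [Hx1 Hx2]. unfold fh1, hh. rewrite sumK_zero. ring.
  intros k Hk. destruct (Nat.lt_ge_cases k k0).
  - rewrite s1_out. ring. right. apply div_ge_iff in Hx1; auto.
    assert (INR k + 1 <= INR k0) by (rewrite <- S_INR; apply le_INR; lia). lra.
  - destruct (Nat.eq_dec k k0).
    + subst. unfold bitR. rewrite Hj. ring.
    + rewrite s1_out. ring. left. apply div_le_iff in Hx2; auto.
      assert (INR k0 + 1 <= INR k) by (rewrite <- S_INR; apply le_INR; lia). lra.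
Qed.

Lemma c2_path :
  let Fi := bF L (fh L Ra K i) (fh1 L Ra K i) in
  let Fj := bF L (fh L Ra K j) (fh1 L Ra K j) in
  path_from0_to (fun q => img Fi (rect 0 Rr 0 0) q /\ img Fj (rect 0 Rr 0 Ra) q) (img Fj (rect 0 Rr Ra Ra)).
Proof.
  intros Fi Fj.
  assert (HT0 : 0 < T) by (unfold T; generalize (pos_INR k0); nra).
  assert (HTR : T <= Rr).
  { unfold T. apply Rle_trans with (INR K * L); auto. apply Rmult_le_compat_r; [lra|].
    rewrite <- S_INR. apply le_INR. lia. }
  assert (chi0 : chi L 0 = 0) by (apply chi_0; lra).
  exists (fun t => Fi (t * T, 0)).
  assert (Hc_h : forall t, continuous (fh L Ra K i) t) by (intros; apply (cont_of_d _ (fh1 L Ra K i)); apply fh_d; lra).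
  assert (Hc_h1 : forall t, continuous (fh1 L Ra K i) t) by (intros; apply (cont_of_d _ (fh2 L Ra K i)); apply fh1_d; lra).
  assert (HlinT : forall t, continuous (fun s => s * T) t).
  { intros t. apply (cont_of_d _ (fun _ => T)). intros. auto_derive; auto. ring. }
  splits.
  - intros t _ eps Heps.
    destruct (path_cont (fun s => s * T - chi L 0 * fh1 L Ra K i (s * T)) (fun s => 0 + fh L Ra K i (s * T))) with t eps
      as [del [Hdel H]]; auto.
    + intros s. apply (continuous_minus (fun s => s * T) (fun s => chi L 0 * fh1 L Ra K i (s * T))). auto.
      apply (continuous_mult (fun _ => chi L 0) (fun s => fh1 L Ra K i (s * T))). apply continuous_const.
      apply (continuous_comp (fun s => s * T) (fh1 L Ra K i)); auto.
    + intros s. apply (continuous_plus (fun _ => 0) (fun s => fh L Ra K i (s * T))). apply continuous_const.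
      apply (continuous_comp (fun s => s * T) (fh L Ra K i)); auto.
    + exists del. split; auto. intros s _ Hs. apply H. auto.
  - intros t Ht. assert (HtT : 0 <= t * T <= T) by (split; nra). split.
    + exists (t * T, 0). split; auto. unfold rect; simpl. split; split; lra.
    + exists (t * T, Ra * s0 (t * T / L - INR k0)). split.
      * unfold rect; simpl. destruct (s0_bnd (t * T / L - INR k0)). split; split; try lra; nra.
      * unfold Fj, Fi, bF; simpl. f_equal.
        -- destruct (Rle_dec (t * T) (INR k0 * L)) as [Hle|Hgt].
           ++ rewrite s0_neg. rewrite Rmult_0_r, chi0. ring.
              apply div_le_iff in Hle; auto. lra.
           ++ rewrite c2_b. rewrite chi0. ring. split. lra. nra.
        -- rewrite (c2_a (t * T)). ring. nra.
  - unfold Fi, bF; simpl. rewrite Rmult_0_l, chi0, fh_0. f_equal; ring.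
  - exists (T, Ra). split.
    + unfold rect; simpl. lra.
    + unfold Fj, Fi, bF; simpl. rewrite Rmult_1_l. f_equal.
      * rewrite c2_b. rewrite chi0. ring. generalize (pos_INR k0). unfold T. nra.
      * rewrite (c2_a T) by lra. unfold T. replace ((INR k0 + 1) * L / L - INR k0) with 1 by (field; lra).
        rewrite s0_one by lra. ring.
Qed.
End Cond2.


Lemma exp_le x y : x <= y -> exp x <= exp y.
Proof. intros [H|H]. left; apply exp_increasing; auto. subst; lra. Qed.

Lemma min_nat (P : nat -> Prop) n : P n -> exists m, P m /\ forall k, (k < m)%nat -> ~ P k.
Proof.
  revert P. induction n as [n IH] using (well_founded_induction Wf_nat.lt_wf). intros P Hn.
  destruct (classic (exists k, (k < n)%nat /\ P k)) as [[k [Hk Pk]]|Hno].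
  - apply (IH k Hk P Pk).
  - exists n. split; auto. intros k Hk Pk. apply Hno. exists k; auto.
Qed.

Lemma bits_high i K n : (i < 2 ^ K)%nat -> (K <= n)%nat -> Nat.testbit i n = false.
Proof.
  intros Hi Hn. rewrite <- (Nat.mod_small i (2 ^ K)) by auto. apply Nat.mod_pow2_bits_high; auto.
Qed.

Lemma bits_diff i j K : (i < 2 ^ K)%nat -> (j < 2 ^ K)%nat -> i <> j ->
  exists k0, (k0 < K)%nat /\ (forall k, (k < k0)%nat -> Nat.testbit i k = Nat.testbit j k) /\
    Nat.testbit i k0 <> Nat.testbit j k0.
Proof.
  intros Hi Hj Hij.
  assert (Hex : exists n, Nat.testbit i n <> Nat.testbit j n).
  { apply NNPP. intros Hno. apply Hij. apply Nat.bits_inj. intros n.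
    apply NNPP. intros Hn. apply Hno. exists n. auto. }
  destruct Hex as [n Hn].
  destruct (min_nat (fun m => Nat.testbit i m <> Nat.testbit j m) n Hn) as [m [Hm Hmin]].
  exists m. splits; auto.
  - destruct (Nat.lt_ge_cases m K); auto. exfalso. apply Hm.
    rewrite (bits_high i K), (bits_high j K); auto.
  - intros k Hk. apply NNPP. intros Hne. apply (Hmin k Hk). auto.
Qed.

Lemma Rpower_ge1 x y : 1 <= x -> 0 <= y -> 1 <= Rpower x y.
Proof. intros. rewrite <- (Rpower_O x) by lra. apply Rle_Rpower; auto. Qed.

Lemma Rpower_big (P Rr c : R) : 0 < c -> 0 < P -> Rpower P (/ c) <= Rr -> P <= Rpower Rr c.
Proof.
  intros Hc HP H.
  assert (Hp : 0 < Rpower P (/ c)) by (unfold Rpower; apply exp_pos).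
  apply Rle_trans with (Rpower (Rpower P (/ c)) c).
  - rewrite Rpower_mult. replace (/ c * c) with 1 by (field; lra). rewrite Rpower_1; lra.
  - apply Rle_Rpower_l; lra.
Qed.

Theorem lemma3p1 (a b : R) (hab : 0 < a /\ a < b /\ b < 1) :
  exists c1 c2 c3 c4 R0 : R,
    0 < c1 /\ 0 < c2 /\ 0 < c3 /\ 0 < c4 /\ 0 < R0 /\
    forall Rr : R, R0 <= Rr ->
      let Ra := Rpower Rr a in
      let S := strip (- Ra) (2 * Ra) in
      exists (N : nat) (F : nat -> pt -> pt),
        (forall i, (i < N)%nat ->
           C2_diffeo_onto_image S (F i) /\ F i (0, 0) = (0, 0)) /\
        (* 1 *)
        exp (c1 * Rpower Rr (1 - b)) <= INR N /\
        (* 2 *)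
        (forall i j, (i < N)%nat -> (j < N)%nat -> i <> j ->
           path_from0_to
             (fun q => img (F i) (rect 0 Rr 0 0) q /\ img (F j) (rect 0 Rr 0 Ra) q)
             (img (F j) (rect 0 Rr Ra Ra))
           \/
           path_from0_to
             (fun q => img (F j) (rect 0 Rr 0 0) q /\ img (F i) (rect 0 Rr 0 Ra) q)
             (img (F i) (rect 0 Rr Ra Ra))) /\
        (* 3 *)
        (forall i x, (i < N)%nat -> S x ->
           d2norm (F i) x <= c2 * Rpower Rr (2 * (a - b)) /\
           (exists J : mat2, in_O2 J /\
              mnorm (mdiff (jac (F i) x) J) <= c3 * Rpower Rr (2 * (a - b))) /\
           (forall y, S y ->
              edist x y / c4 <= edist (F i x) (F i y) /\
              edist (F i x) (F i y) <= c4 * edist x y)).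
Proof.
  destruct hab as [Ha [Hab Hb]].
  set (P100 := Rpower 100 (/ (b - a))). set (P2 := Rpower 2 (/ (1 - b))).
  assert (HP100 : 0 < P100) by (unfold P100, Rpower; apply exp_pos).
  assert (HP2 : 0 < P2) by (unfold P2, Rpower; apply exp_pos).
  assert (Hln2 : 0 < ln 2) by (rewrite <- ln_1; apply ln_increasing; lra).
  exists (ln 2 / 2), 134, 66, 2, (1 + P100 + P2).
  splits; try lra.
  intros Rr HR Ra S.
  assert (HR1 : 1 <= Rr) by lra.
  assert (HRa1 : 1 <= Ra) by (apply Rpower_ge1; lra).
  set (L := Rpower Rr b).
  assert (HL1 : 1 <= L) by (apply Rpower_ge1; lra).
  assert (HL0 : 0 < L) by lra. assert (HRa0 : 0 < Ra) by lra.
  assert (Hth_eq : Ra / L = Rpower Rr (a - b)).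
  { unfold Ra, L. unfold Rminus. rewrite Rpower_plus, Rpower_Ropp. reflexivity. }
  assert (Hbig1 : 100 <= Rpower Rr (b - a)) by (apply Rpower_big; [lra|lra|fold P100; lra]).
  assert (Hth_le : Ra / L <= 1 / 100).
  { rewrite Hth_eq. replace (a - b) with (- (b - a)) by ring. rewrite Rpower_Ropp.
    unfold Rdiv. rewrite Rmult_1_l. apply Rinv_le_contravar; lra. }
  assert (Hth_pos : 0 < Ra / L) by (apply Rdiv_lt_0_compat; lra).
  assert (Hth : 0 < Ra / L <= 1 / 100) by lra.
  assert (HLth : 1 / L <= Ra / L) by (unfold Rdiv; apply Rmult_le_compat_r; [left; apply Rinv_0_lt_compat|]; lra).
  assert (HT_eq : Rr / L = Rpower Rr (1 - b)).
  { unfold L. unfold Rminus. rewrite Rpower_plus, Rpower_Ropp, Rpower_1 by lra. reflexivity. }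
  assert (HT2 : 2 <= Rr / L) by (rewrite HT_eq; apply Rpower_big; [lra|lra|fold P2; lra]).
  destruct (nfloor_ex (Rr / L) ltac:(lra)) as [K [HK1 HK2]].
  assert (HKR : INR K * L <= Rr) by (apply div_ge_iff; auto).
  exists (2 ^ K)%nat, (fun i => bF L (fh L Ra K i) (fh1 L Ra K i)).
  assert (Hsq : Rpower Rr (2 * (a - b)) = (Ra / L) ^ 2).
  { rewrite Hth_eq. replace (2 * (a - b)) with ((a - b) + (a - b)) by ring. rewrite Rpower_plus. ring. }
  splits.
  - intros i Hi. split.
    + apply (bF_diffeo L (3 * (Ra / L)) (27 * (Ra / L) / L) (fh L Ra K i) (fh1 L Ra K i) (fh2 L Ra K i) (fh3 L Ra K i)).
      * lra.
      * apply fh_d; lra.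
      * apply fh1_d; lra.
      * apply fh2_d; lra.
      * apply fh3_c; lra.
      * apply fh1_bnd; lra.
      * apply fh2_bnd; lra.
      * lra.
      * replace (L * (27 * (Ra / L) / L)) with (27 * (Ra / L)) by (field; lra). lra.
    + unfold bF; simpl. rewrite chi_0 by lra. rewrite fh_0. f_equal; ring.
  - rewrite <- HT_eq. rewrite pow_INR. replace (INR 2) with 2 by (simpl; ring).
    rewrite <- Rpower_pow by lra. unfold Rpower. apply exp_le.
    assert (Rr / L / 2 <= INR K) by lra. nra.
  - intros i j Hi Hj Hij. destruct (bits_diff i j K Hi Hj Hij) as [k0 [Hk0 [Hlow Hne]]].
    destruct (Nat.testbit i k0) eqn:Ei; destruct (Nat.testbit j k0) eqn:Ej; try congruence.
    + left. exact (c2_path L Ra Rr K i j k0 HL0 HRa0 Hk0 HKR Hlow Ei Ej).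
    + right. exact (c2_path L Ra Rr K j i k0 HL0 HRa0 Hk0 HKR (fun k Hk => eq_sym (Hlow k Hk)) Ej Ei).
  - intros i x Hi Hx. unfold S, strip in Hx.
    assert (Hy : Rabs (snd x) <= 2 * (Ra / L) * L).
    { replace (2 * (Ra / L) * L) with (2 * Ra) by (field; lra). apply Rabs_le; lra. }
    rewrite Hsq. splits.
    + apply (hess_bnd L (Ra / L) (fh L Ra K i) (fh1 L Ra K i) (fh2 L Ra K i) (fh3 L Ra K i)); auto.
      apply fh_d; lra. apply fh1_d; lra. apply fh2_d; lra.
      apply fh1_bnd; lra. apply fh2_bnd; lra. apply fh3_bnd; lra.
    + apply (jac_bnd L (Ra / L) (fh L Ra K i) (fh1 L Ra K i) (fh2 L Ra K i)); auto.
      apply fh_d; lra. apply fh1_d; lra. apply fh1_bnd; lra. apply fh2_bnd; lra.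
    + intros y _. apply (bilip L (Ra / L) (fh L Ra K i) (fh1 L Ra K i) (fh2 L Ra K i)); auto.
      apply fh_d; lra. apply fh1_d; lra. apply fh1_bnd; lra. apply fh2_bnd; lra.
Qed.
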